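(* Let $\psi:[0,1]\to\mathbb{C}$ be a continuous function of bounded variation on $[0,1]$ with $\psi(0)=\psi(1)=0$ and $\psi(x)/x\in L_2(0,1)$. Let $$\hat\psi(t)=\int_0^1 e^{itx}\psi(x)\,dx,\qquad \Psi(t)=\int_0^1 e^{itx}\,d\psi(x).$$ Suppose that (i) $t^m\hat\psi^{(m)}(t)\in L_1(1,\infty)$ for $m=0,1,2$, and (ii) $t^m\hat\psi^{(m-1)}(t)=o(1)$ as $t\to\infty$ for $m=1,2$. Then $\Psi(t)=o(1)$ as $|t|\to\infty$, i.e. $\psi$ supports a Rajchman measure.
   Context: A function of bounded variation supports a Rajchman measure if the Fourier–Stieltjes transform of the associated measure tends to zero at infinity. *)

(* Defs.v *)
From Stdlib Require Import Reals.
From Coquelicot Require Import Coquelicot.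
Open Scope R_scope.

Definition cis (y : R) : C := (cos y, sin y).

Definition cont_on01 (psi : R -> C) : Prop :=
  forall x, 0 <= x <= 1 -> forall eps, 0 < eps -> exists delta, 0 < delta /\
    forall y, 0 <= y <= 1 -> Rabs (y - x) < delta -> Cmod (psi y - psi x) < eps.

Definition partition (a b : R) (p : nat -> R) (n : nat) : Prop :=
  p O = a /\ p n = b /\ forall k, (k < n)%nat -> p k <= p (S k).

Definition bounded_variation01 (psi : R -> C) : Prop :=
  exists M : R, forall p n, partition 0 1 p n ->
    sum_f_R0 (fun k => Cmod (psi (p (S k)) - psi (p k))) (pred n) <= M.

Fixpoint Csum (f : nat -> C) (n : nat) : C :=
  match n with O => RtoC 0 | S n' => Cplus (Csum f n') (f n') end.

Definition is_RS_integral (f g : R -> C) (a b : R) (I : C) : Prop :=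
  forall eps, 0 < eps -> exists delta, 0 < delta /\
    forall (p xi : nat -> R) (n : nat), (0 < n)%nat -> partition a b p n ->
      (forall k, (k < n)%nat -> p (S k) - p k < delta) ->
      (forall k, (k < n)%nat -> p k <= xi k <= p (S k)) ->
      Cmod (Csum (fun k => f (xi k) * (g (p (S k)) - g (p k)))%C n - I) < eps.

Definition hatpsi (psi : R -> C) (t : R) : C :=
  (RInt (fun x => Re (cis (t * x) * psi x)%C) 0 1,
   RInt (fun x => Im (cis (t * x) * psi x)%C) 0 1).

Definition Cderive (f : R -> C) (t : R) : C :=
  (Derive (fun s => Re (f s)) t, Derive (fun s => Im (f s)) t).

Fixpoint Cderive_n (m : nat) (f : R -> C) : R -> C :=
  match m with
  | O => f
  | S m' => Cderive (Cderive_n m' f)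
  end.

(* Main.v *)
Require Import Defs.
From Stdlib Require Import Reals.
From Coquelicot Require Import Coquelicot.
Open Scope R_scope.
From Stdlib Require Import Lra Lia Psatz ZArith Classical.
From Stdlib Require List.
Open Scope R_scope.
Notation CV := C_R_CompleteNormedModule.

Open Scope R_scope.

Fixpoint rsum (f : nat -> R) (n : nat) : R :=
  match n with O => 0 | S n' => rsum f n' + f n' end.

Lemma rsum_ext f g n : (forall k, (k < n)%nat -> f k = g k) -> rsum f n = rsum g n.
Proof. induction n; simpl; intros H; auto. rewrite IHn, H; auto. Qed.

Lemma rsum_le f g n : (forall k, (k < n)%nat -> f k <= g k) -> rsum f n <= rsum g n.
Proof. induction n; simpl; intros H. lra. specialize (IHn (fun k Hk => H k (Nat.lt_lt_succ_r _ _ Hk))). specialize (H n (Nat.lt_succ_diag_r n)). lra. Qed.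

Lemma rsum_plus f g n : rsum (fun k => f k + g k) n = rsum f n + rsum g n.
Proof. induction n; simpl; lra. Qed.

Lemma rsum_minus f g n : rsum (fun k => f k - g k) n = rsum f n - rsum g n.
Proof. induction n; simpl; lra. Qed.

Lemma rsum_scal c f n : rsum (fun k => c * f k) n = c * rsum f n.
Proof. induction n; simpl; try rewrite IHn; lra. Qed.

Lemma rsum_nonneg f n : (forall k, (k < n)%nat -> 0 <= f k) -> 0 <= rsum f n.
Proof. intros H. assert (E: forall m, rsum (fun _ => 0) m = 0) by (induction m; simpl; lra). rewrite <- (E n). apply rsum_le; auto. Qed.

Lemma rsum_tele f n : rsum (fun k => f (S k) - f k) n = f n - f O.
Proof. induction n; simpl. lra. rewrite IHn. lra. Qed.

Lemma rsum_add f a b : rsum f (a + b) = rsum f a + rsum (fun k => f (a + k)%nat) b.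
Proof. induction b. rewrite Nat.add_0_r. simpl. lra. rewrite Nat.add_succ_r. simpl. rewrite IHb. lra. Qed.

Lemma rsum_sum_f_R0 f n : (0 < n)%nat -> sum_f_R0 f (pred n) = rsum f n.
Proof. destruct n. lia. intros _. simpl. induction n; simpl. lra. rewrite IHn. simpl. lra. Qed.

Lemma rsum_double (f : nat -> nat -> R) N n : (0 < n)%nat ->
  rsum (fun m => f (m / n)%nat (m mod n)%nat) (N * n) = rsum (fun b => rsum (f b) n) N.
Proof.
  intros Hn. induction N. simpl. auto.
  replace (S N * n)%nat with (N * n + n)%nat by lia.
  rewrite rsum_add, IHN. simpl. f_equal. apply rsum_ext. intros k Hk.
  replace (N * n + k)%nat with (k + N * n)%nat by lia.
  rewrite Nat.div_add, Nat.Div0.mod_add, Nat.div_small, Nat.mod_small; try lia. reflexivity.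
Qed.

Lemma rsum_indic (f : nat -> R) n k : (k < n)%nat ->
  rsum (fun b => if Nat.eq_dec b k then f b else 0) n = f k.
Proof.
  induction n; intros Hk. lia. simpl. destruct (Nat.eq_dec n k).
  subst. rewrite (rsum_ext _ (fun _ => 0)). clear. induction k; simpl; lra.
  intros j Hj; destruct (Nat.eq_dec j k); lia || auto.
  rewrite IHn by lia. lra.
Qed.

Open Scope C_scope.

Lemma Csum_ext f g n : (forall k, (k < n)%nat -> f k = g k) -> Csum f n = Csum g n.
Proof. induction n; simpl; intros H; auto. rewrite IHn, H; auto. Qed.

Lemma Csum_plus f g n : Csum (fun k => f k + g k) n = Csum f n + Csum g n.
Proof. induction n; simpl. ring. rewrite IHn; ring. Qed.

Lemma Csum_minus f g n : Csum (fun k => f k - g k) n = Csum f n - Csum g n.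
Proof. induction n; simpl. ring. rewrite IHn; ring. Qed.

Lemma Csum_scal c f n : Csum (fun k => c * f k) n = c * Csum f n.
Proof. induction n; simpl. ring. rewrite IHn; ring. Qed.

Lemma Csum_tele f n : Csum (fun k => f (S k) - f k) n = f n - f O.
Proof. induction n; simpl. ring. rewrite IHn. ring. Qed.

Lemma Csum_add f a b : Csum f (a + b) = Csum f a + Csum (fun k => f (a + k)%nat) b.
Proof. induction b. rewrite Nat.add_0_r. simpl. ring. rewrite Nat.add_succ_r. simpl. rewrite IHb. ring. Qed.

Lemma Re_Csum f n : Re (Csum f n) = rsum (fun k => Re (f k)) n.
Proof. induction n; simpl; auto. rewrite <- IHn. reflexivity. Qed.

Lemma Cconj_Csum f n : Cconj (Csum f n) = Csum (fun k => Cconj (f k)) n.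
Proof. induction n; simpl. unfold Cconj, RtoC; simpl; f_equal; lra. rewrite <- IHn. unfold Cconj, Cplus; simpl; f_equal; lra. Qed.

Lemma Cmod_Csum f n : Cmod (Csum f n) <= rsum (fun k => Cmod (f k)) n.
Proof. induction n; simpl. rewrite Cmod_0; lra. eapply Rle_trans. apply Cmod_triangle. lra. Qed.

Lemma Csum_RtoC f n : Csum (fun k => RtoC (f k)) n = RtoC (rsum f n).
Proof. induction n; simpl; auto. rewrite IHn. unfold RtoC, Cplus; simpl; f_equal; lra. Qed.

Lemma cis_mult a b : cis a * cis b = cis (a + b).
Proof. unfold cis, Cmult; simpl. rewrite cos_plus, sin_plus. f_equal; lra. Qed.

Lemma cis_conj a : Cconj (cis a) = cis (- a).
Proof. unfold cis, Cconj; simpl. rewrite cos_neg, sin_neg. auto. Qed.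

Lemma Cmod_cis a : Cmod (cis a) = 1.
Proof. assert (E: (cos a ^ 2 + sin a ^ 2)%R = 1) by (pose proof (sin2_cos2 a) as H; unfold Rsqr in H; nra).
  unfold cis, Cmod. simpl fst; simpl snd. rewrite E. apply sqrt_1. Qed.

Lemma cis_0 : cis 0 = 1.
Proof. unfold cis. rewrite cos_0, sin_0. reflexivity. Qed.

Lemma Cmod_le_re_im z : Cmod z <= Rabs (Re z) + Rabs (Im z).
Proof.
  unfold Cmod. destruct z as [a b]; simpl.
  pose proof (Rabs_pos a); pose proof (Rabs_pos b).
  apply Rsqr_incr_0_var; [| lra].
  rewrite Rsqr_sqrt by nra. unfold Rsqr.
  assert (Ha: (a*a = Rabs a * Rabs a)%R) by (apply Rsqr_abs).
  assert (Hb: (b*b = Rabs b * Rabs b)%R) by (apply Rsqr_abs).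
  nra.
Qed.

Lemma Re_le_Cmod z : Re z <= Cmod z.
Proof. pose proof (re_le_Cmod z). pose proof (Rle_abs (Re z)). lra. Qed.
Lemma Im_le_Cmod z : Rabs (Im z) <= Cmod z.
Proof. pose proof (Cmod_conj z). pose proof (re_le_Cmod (Ci * Cconj z)). rewrite Cmod_mult, Cmod_Ci, Cmod_conj in H0. destruct z; unfold Ci, Cconj, Cmult in H0; simpl in H0. replace (0 * r - 1 * - r0)%R with r0 in H0 by ring. simpl; lra. Qed.

Close Scope C_scope.
Open Scope R_scope.

Open Scope R_scope.

Definition clamp (x : R) : R := Rmax 0 (Rmin 1 x).

Lemma clamp_in x : 0 <= clamp x <= 1.
Proof. unfold clamp. unfold Rmax, Rmin. repeat destruct Rle_dec; lra. Qed.
Lemma clamp_id x : 0 <= x <= 1 -> clamp x = x.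
Proof. unfold clamp, Rmax, Rmin. intros. repeat destruct Rle_dec; lra. Qed.
Lemma clamp_lip x y : Rabs (clamp x - clamp y) <= Rabs (x - y).
Proof. unfold clamp, Rmax, Rmin. repeat destruct Rle_dec; unfold Rabs; repeat destruct Rcase_abs; lra. Qed.

Definition Ccont (f : R -> C) (x : R) : Prop :=
  forall eps, 0 < eps -> exists delta, 0 < delta /\
    forall y, Rabs (y - x) < delta -> Cmod (f y - f x)%C < eps.

Lemma Ccont_continuous f x : Ccont f x -> @continuous R_UniformSpace C_R_CompleteNormedModule f x.
Proof.
  intros H. apply filterlim_locally. intros eps.
  destruct (H eps (cond_pos eps)) as [d [Hd Hy]].
  exists (mkposreal d Hd). intros y Hb. specialize (Hy y Hb).
  pose proof (re_le_Cmod (f y - f x)%C). pose proof (Im_le_Cmod (f y - f x)%C).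
  split; unfold ball; simpl; unfold AbsRing_ball, abs, minus, plus, opp; simpl;
  destruct (f y), (f x); simpl in *; lra.
Qed.

Lemma Ccont_plus f g x : Ccont f x -> Ccont g x -> Ccont (fun y => f y + g y)%C x.
Proof.
  intros Hf Hg eps He.
  destruct (Hf (eps/2)) as [d1 [Hd1 H1]]; [lra|].
  destruct (Hg (eps/2)) as [d2 [Hd2 H2]]; [lra|].
  exists (Rmin d1 d2). split. apply Rmin_pos; auto.
  intros y Hy. replace (f y + g y - (f x + g x))%C with ((f y - f x) + (g y - g x))%C by ring.
  eapply Rle_lt_trans. apply Cmod_triangle.
  specialize (H1 y (Rlt_le_trans _ _ _ Hy (Rmin_l _ _))).
  specialize (H2 y (Rlt_le_trans _ _ _ Hy (Rmin_r _ _))). lra.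
Qed.

Lemma Ccont_mult f g x : Ccont f x -> Ccont g x -> Ccont (fun y => f y * g y)%C x.
Proof.
  intros Hf Hg eps He.
  set (A := Cmod (f x)). set (B := Cmod (g x)).
  assert (HA: 0 <= A) by apply Cmod_ge_0. assert (HB: 0 <= B) by apply Cmod_ge_0.
  set (e := Rmin 1 (eps / (A + B + 1) / 2)).
  assert (He0: 0 < e). { apply Rmin_pos. lra. apply Rmult_lt_0_compat; [|lra]. apply Rdiv_lt_0_compat; lra. }
  assert (He1: e <= 1) by apply Rmin_l.
  assert (He2: e * (A + B + 1) <= eps / 2).
  { unfold e. apply Rle_trans with ((eps / (A + B + 1) / 2) * (A + B + 1)).
    apply Rmult_le_compat_r. lra. apply Rmin_r. field_simplify; lra. }
  destruct (Hf e He0) as [d1 [Hd1 H1]].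
  destruct (Hg e He0) as [d2 [Hd2 H2]].
  exists (Rmin d1 d2). split. apply Rmin_pos; auto.
  intros y Hy.
  specialize (H1 y (Rlt_le_trans _ _ _ Hy (Rmin_l _ _))).
  specialize (H2 y (Rlt_le_trans _ _ _ Hy (Rmin_r _ _))).
  replace (f y * g y - f x * g x)%C with ((f y - f x) * (g y - g x) + (f y - f x) * g x + f x * (g y - g x))%C by ring.
  eapply Rle_lt_trans. apply Cmod_triangle. eapply Rle_lt_trans. apply Rplus_le_compat_r. apply Cmod_triangle.
  rewrite !Cmod_mult. fold A B.
  pose proof (Cmod_ge_0 (f y - f x)%C). pose proof (Cmod_ge_0 (g y - g x)%C).
  assert (Cmod (f y - f x)%C * Cmod (g y - g x)%C <= e * e) by (apply Rmult_le_compat; lra).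
  assert (Cmod (f y - f x)%C * B <= e * B) by (apply Rmult_le_compat_r; lra).
  assert (A * Cmod (g y - g x)%C <= A * e) by (apply Rmult_le_compat_l; lra).
  nra.
Qed.

Lemma Ccont_const c x : Ccont (fun _ => c) x.
Proof. intros eps He. exists 1. split. lra. intros. replace (c - c)%C with (RtoC 0) by ring. rewrite Cmod_0. auto. Qed.

Lemma Rcont_eps f x : continuity_pt f x -> forall eps, 0 < eps -> exists delta, 0 < delta /\
  forall y, Rabs (y - x) < delta -> Rabs (f y - f x) < eps.
Proof.
  intros H eps He. destruct (H eps He) as [d [Hd Hy]]. exists d. split. lra.
  intros y Hyx. destruct (Req_dec y x). subst. rewrite Rminus_diag, Rabs_R0. auto.
  apply Hy. split. split. exact I. auto. simpl. unfold Rdist. auto.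
Qed.

Lemma Ccont_of_comp f x : continuity_pt (fun y => Re (f y)) x -> continuity_pt (fun y => Im (f y)) x -> Ccont f x.
Proof.
  intros H1 H2 eps He.
  destruct (Rcont_eps _ _ H1 (eps/2)) as [d1 [Hd1 K1]]; [lra|].
  destruct (Rcont_eps _ _ H2 (eps/2)) as [d2 [Hd2 K2]]; [lra|].
  exists (Rmin d1 d2). split. apply Rmin_pos; auto.
  intros y Hy. eapply Rle_lt_trans. apply Cmod_le_re_im.
  specialize (K1 y (Rlt_le_trans _ _ _ Hy (Rmin_l _ _))).
  specialize (K2 y (Rlt_le_trans _ _ _ Hy (Rmin_r _ _))).
  destruct (f y), (f x). simpl in *. unfold Rminus in *. lra.
Qed.

Lemma cis_lin_Ccont s x : Ccont (fun y => cis (s * y)) x.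
Proof.
  apply Ccont_of_comp; simpl.
  apply (continuity_pt_comp (fun y => s * y) cos x). reg. apply continuity_cos.
  apply (continuity_pt_comp (fun y => s * y) sin x). reg. apply continuity_sin.
Qed.

Section Psi.
Variable psi : R -> C.
Hypothesis Hc : cont_on01 psi.

Definition psit (x : R) : C := psi (clamp x).

Lemma psit_Ccont x : Ccont psit x.
Proof.
  intros eps He. destruct (Hc (clamp x) (clamp_in x) eps He) as [d [Hd H]].
  exists d. split; auto. intros y Hy. unfold psit. apply H. apply clamp_in.
  eapply Rle_lt_trans. apply clamp_lip. auto.
Qed.

Lemma psi_unif : forall eps, 0 < eps -> exists delta, 0 < delta /\
  forall x y, 0 <= x <= 1 -> 0 <= y <= 1 -> Rabs (x - y) < delta -> Cmod (psi x - psi y)%C < eps.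
Proof.
  intros eps He.
  assert (C1: forall x, (fun c => 0 <= c <= 1) x -> continuity_pt (fun y => Re (psit y)) x).
  { intros x _. apply continuity_pt_filterlim. intros P [e HP].
    destruct (psit_Ccont x e (cond_pos e)) as [d [Hd Hy]]. exists (mkposreal d Hd).
    intros y Hyx. apply HP. specialize (Hy y Hyx). pose proof (re_le_Cmod (psit y - psit x)%C).
    unfold ball; simpl; unfold AbsRing_ball, abs, minus, plus, opp; simpl. destruct (psit y), (psit x); simpl in *. lra. }
  assert (C2: forall x, (fun c => 0 <= c <= 1) x -> continuity_pt (fun y => Im (psit y)) x).
  { intros x _. apply continuity_pt_filterlim. intros P [e HP].
    destruct (psit_Ccont x e (cond_pos e)) as [d [Hd Hy]]. exists (mkposreal d Hd).
    intros y Hyx. apply HP. specialize (Hy y Hyx). pose proof (Im_le_Cmod (psit y - psit x)%C).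
    unfold ball; simpl; unfold AbsRing_ball, abs, minus, plus, opp; simpl. destruct (psit y), (psit x); simpl in *. lra. }
  destruct (Heine _ _ (compact_P3 0 1) C1 (mkposreal (eps/2) ltac:(lra))) as [d1 H1].
  destruct (Heine _ _ (compact_P3 0 1) C2 (mkposreal (eps/2) ltac:(lra))) as [d2 H2].
  exists (Rmin d1 d2). split. apply Rmin_pos; apply cond_pos.
  intros x y Hx Hy Hxy.
  specialize (H1 x y Hx Hy (Rlt_le_trans _ _ _ Hxy (Rmin_l _ _))).
  specialize (H2 x y Hx Hy (Rlt_le_trans _ _ _ Hxy (Rmin_r _ _))).
  simpl in H1, H2. unfold psit in H1, H2. rewrite !clamp_id in H1, H2 by auto.
  eapply Rle_lt_trans. apply Cmod_le_re_im. destruct (psi x), (psi y). simpl in *. unfold Rminus in *. lra.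
Qed.

End Psi.

Open Scope R_scope.


Lemma plusC (a b : C) : @plus CV a b = (a + b)%C. reflexivity. Qed.
Lemma minusC (a b : C) : @minus CV a b = (a - b)%C. reflexivity. Qed.
Lemma normC (a : C) : @norm R_AbsRing CV a = Cmod a. symmetry. apply Cmod_norm. Qed.

Lemma is_RInt_C (f : R -> C) a b lu lv : is_RInt (fun t => fst (f t)) a b lu -> is_RInt (fun t => snd (f t)) a b lv -> is_RInt (V:=CV) f a b (lu,lv).
Proof. intros. apply (is_RInt_fct_extend_pair (U:=R_NormedModule) (V:=R_NormedModule)); auto. Qed.
Lemma is_RInt_Cfst (f : R -> C) a b l : is_RInt (V:=CV) f a b l -> is_RInt (fun t => fst (f t)) a b (fst l).
Proof. intros. apply (is_RInt_fct_extend_fst (U:=R_NormedModule) (V:=R_NormedModule)); auto. Qed.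
Lemma is_RInt_Csnd (f : R -> C) a b l : is_RInt (V:=CV) f a b l -> is_RInt (fun t => snd (f t)) a b (snd l).
Proof. intros. apply (is_RInt_fct_extend_snd (U:=R_NormedModule) (V:=R_NormedModule)); auto. Qed.
Lemma Rlin (f g : R -> R) a b l1 l2 c1 c2 : is_RInt f a b l1 -> is_RInt g a b l2 ->
  is_RInt (fun t => c1 * f t + c2 * g t) a b (c1 * l1 + c2 * l2).
Proof. intros A B. apply (is_RInt_plus (V:=R_NormedModule) (fun t => c1 * f t) (fun t => c2 * g t)).
  apply (is_RInt_scal (V:=R_NormedModule)); auto. apply (is_RInt_scal (V:=R_NormedModule)); auto. Qed.
Lemma is_RInt_Cmult (c : C) (f : R -> C) a b l : is_RInt (V:=CV) f a b l -> is_RInt (V:=CV) (fun x => c * f x)%C a b (c * l)%C.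
Proof.
  intros H. pose proof (is_RInt_Cfst _ _ _ _ H) as H1. pose proof (is_RInt_Csnd _ _ _ _ H) as H2.
  destruct c as [c1 c2]. destruct l as [l1 l2]. simpl in H1, H2.
  assert (A: is_RInt (fun t => c1 * fst (f t) + (- c2) * snd (f t)) a b (c1 * l1 + (- c2) * l2)) by (apply Rlin; auto).
  assert (B: is_RInt (fun t => c1 * snd (f t) + c2 * fst (f t)) a b (c1 * l2 + c2 * l1)) by (apply Rlin; auto).
  replace ((c1, c2) * (l1, l2))%C with (c1 * l1 + (- c2) * l2, c1 * l2 + c2 * l1) by (unfold Cmult; simpl; f_equal; ring).
  apply is_RInt_C.
  - eapply is_RInt_ext; [| exact A]. intros x _. unfold Cmult. simpl. ring.
  - eapply is_RInt_ext; [| exact B]. intros x _. unfold Cmult. simpl. ring.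
Qed.

Definition dfs (s x : R) : C := (Ci * RtoC s * cis (s * x))%C.

Lemma dfs_eq s x : dfs s x = (- s * sin (s * x), s * cos (s * x)).
Proof. unfold dfs, cis, Ci, RtoC, Cmult; simpl. f_equal; ring. Qed.

Lemma Cmod_dfs s x : Cmod (dfs s x) = Rabs s.
Proof. unfold dfs. rewrite !Cmod_mult, Cmod_Ci, Cmod_cis, Cmod_R. ring. Qed.

Lemma dfs_Ccont s x : Ccont (dfs s) x.
Proof. unfold dfs. apply Ccont_mult. apply Ccont_const. apply cis_lin_Ccont. Qed.

Lemma FTC_cis s a b : is_RInt (V:=CV) (dfs s) a b (cis (s * b) - cis (s * a))%C.
Proof.
  assert (A: is_RInt (fun x => - s * sin (s * x)) a b (cos (s * b) - cos (s * a))).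
  { apply (is_RInt_derive (fun x => cos (s * x))). intros; auto_derive; auto. ring.
    intros. apply continuity_pt_filterlim. apply (continuity_pt_mult (fun _ => -s) (fun x => sin (s * x))). reg.
    apply (continuity_pt_comp (fun y => s * y) sin x). reg. apply continuity_sin. }
  assert (B: is_RInt (fun x => s * cos (s * x)) a b (sin (s * b) - sin (s * a))).
  { apply (is_RInt_derive (fun x => sin (s * x))). intros; auto_derive; auto. ring.
    intros. apply continuity_pt_filterlim. apply (continuity_pt_mult (fun _ => s) (fun x => cos (s * x))). reg.
    apply (continuity_pt_comp (fun y => s * y) cos x). reg. apply continuity_cos. }
  replace (cis (s * b) - cis (s * a))%C with (cos (s * b) - cos (s * a), sin (s * b) - sin (s * a))
    by (unfold cis, Cminus, Cplus, Copp; simpl; f_equal; ring).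
  apply is_RInt_C.
  - eapply is_RInt_ext; [| exact A]. intros x _. rewrite dfs_eq. reflexivity.
  - eapply is_RInt_ext; [| exact B]. intros x _. rewrite dfs_eq. reflexivity.
Qed.

Section IBP.
Variable psi : R -> C.
Hypothesis Hc : cont_on01 psi.
Hypothesis H0 : psi 0 = 0%C.
Hypothesis H1 : psi 1 = 0%C.

Definition gs (s x : R) : C := (psit psi x * dfs s x)%C.
Definition Hs (s b : R) : C := RInt (V:=CV) (gs s) 0 b.
Definition Jint (s : R) : C := Hs s 1.

Lemma gs_Ccont s x : Ccont (gs s) x.
Proof. unfold gs. apply Ccont_mult. apply psit_Ccont; auto. apply dfs_Ccont. Qed.

Lemma gs_ex s a b : ex_RInt (V:=CV) (gs s) a b.
Proof. apply ex_RInt_continuous. intros. apply Ccont_continuous, gs_Ccont. Qed.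

Lemma Hs_diff s a b : (Hs s b - Hs s a)%C = RInt (V:=CV) (gs s) a b.
Proof.
  unfold Hs. rewrite <- (RInt_Chasles (V:=CV) (gs s) 0 a b) by apply gs_ex.
  rewrite plusC. ring.
Qed.

Lemma piece_est s a b c e : 0 <= a <= b -> b <= 1 ->
  (forall x, a <= x <= b -> Cmod (psi x - c)%C <= e) ->
  Cmod (RInt (V:=CV) (gs s) a b - c * (cis (s * b) - cis (s * a)))%C <= (b - a) * (e * Rabs s).
Proof.
  intros Hab Hb Hx.
  assert (Hi: is_RInt (V:=CV) (fun x => gs s x - c * dfs s x)%C a b
                 (RInt (V:=CV) (gs s) a b - c * (cis (s * b) - cis (s * a)))%C).
  { rewrite <- minusC. apply (is_RInt_minus (V:=CV)). apply RInt_correct, gs_ex.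
    apply is_RInt_Cmult. apply FTC_cis. }
  rewrite <- normC. refine (norm_RInt_le_const (V:=CV) _ a b _ _ (proj2 Hab) _ Hi).
  intros x Hx'. rewrite normC. unfold gs, psit. rewrite clamp_id by lra.
  replace (psi x * dfs s x - c * dfs s x)%C with ((psi x - c) * dfs s x)%C by ring.
  rewrite Cmod_mult, Cmod_dfs. apply Rmult_le_compat_r. apply Rabs_pos. auto.
Qed.

End IBP.

Open Scope R_scope.
Section IBP.
Variable psi : R -> C.
Hypothesis Hc : cont_on01 psi.
Hypothesis H0 : psi 0 = 0%C.
Hypothesis H1 : psi 1 = 0%C.
Lemma RS_exp s : is_RS_integral (fun x => cis (s * x)) psi 0 1 (- Jint psi s)%C.
Proof.
  intros eps He.
  set (e := eps / 2 / (Rabs s + 1)).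
  assert (He0: 0 < e) by (unfold e; apply Rdiv_lt_0_compat; pose proof (Rabs_pos s); lra).
  destruct (psi_unif psi Hc e He0) as [d [Hd Hu]].
  exists d. split; auto. intros p xi n Hn [Hp0 [Hpn Hmon]] Hmesh Htag.
  set (f := fun x => cis (s * x)).
  set (E := fun m => (Csum (fun k => f (xi k) * (psi (p (S k)) - psi (p k))) m
                       - f (xi (pred m)) * psi (p m) + Hs psi s (xi (pred m)))%C).
  assert (Pin: forall k, (k <= n)%nat -> 0 <= p k <= 1).
  { assert (forall k, (k <= n)%nat -> p 0%nat <= p k /\ p k <= p n).
    { intros k Hk. split.
      - induction k. lra. specialize (Hmon k ltac:(lia)). specialize (IHk ltac:(lia)). lra.
      - remember (n - k)%nat as j. assert (k = n - j)%nat by lia. subst k. clear Heqj Hk.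
        induction j. rewrite Nat.sub_0_r; lra.
        destruct (Nat.le_gt_cases n j). replace (n - S j)%nat with (n - j)%nat by lia. auto.
        specialize (Hmon (n - S j)%nat ltac:(lia)). replace (S (n - S j)) with (n - j)%nat in Hmon by lia. lra. }
    intros k Hk. destruct (H k Hk). lra. }
  assert (Hclose: forall k x, (k <= n)%nat -> 0 <= x <= 1 -> Rabs (x - p k) < d -> Cmod (psi x - psi (p k))%C <= e).
  { intros k x Hk Hx Hxd. left. apply Hu; auto. }
  assert (Hest: forall m, (1 <= m <= n)%nat -> Cmod (E m) <= e * Rabs s * xi (pred m)).
  { intros m Hm. induction m. lia. destruct m.
    - assert (E1: E 1%nat = (RInt (V:=CV) (gs psi s) 0 (xi 0%nat) - 0 * (cis (s * xi 0%nat) - cis (s * 0)))%C).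
      { unfold E. simpl Csum. simpl pred. rewrite Hp0, H0. unfold Hs. ring. }
      rewrite E1.
      specialize (Htag 0%nat Hn) as T0. specialize (Pin 1%nat Hn) as P1. specialize (Hmesh 0%nat Hn) as M0.
      rewrite Hp0 in *.
      eapply Rle_trans. apply (piece_est psi Hc) with (e := e).
      + lra.
      + lra.
      + intros x Hx. rewrite <- H0, <- Hp0. apply Hclose. lia. lra.
        rewrite Hp0, Rminus_0_r, Rabs_right by lra. lra.
      + simpl. lra.
    - specialize (IHm ltac:(lia)).
      assert (Hdiff: (E (S (S m)) - E (S m) = RInt (V:=CV) (gs psi s) (xi m) (xi (S m))
                         - psi (p (S m)) * (cis (s * xi (S m)) - cis (s * xi m)))%C).
      { unfold E. simpl pred. rewrite <- (Hs_diff psi Hc). simpl Csum. unfold f. ring. }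
      replace (E (S (S m))) with (E (S m) + (E (S (S m)) - E (S m)))%C by ring.
      eapply Rle_trans. apply Cmod_triangle. rewrite Hdiff.
      specialize (Htag m ltac:(lia)) as T1. specialize (Htag (S m) ltac:(lia)) as T2.
      specialize (Pin m ltac:(lia)) as P1. specialize (Pin (S (S m)) ltac:(lia)) as P2.
      specialize (Hmesh m ltac:(lia)) as M1. specialize (Hmesh (S m) ltac:(lia)) as M2.
      eapply Rle_trans. apply Rplus_le_compat. apply IHm. apply (piece_est psi Hc) with (e := e).
      + lra.
      + lra.
      + intros x Hx. apply Hclose. lia. lra. unfold Rabs; destruct Rcase_abs; lra.
      + simpl pred. right. ring. }
  assert (Hfin: (Csum (fun k => f (xi k) * (psi (p (S k)) - psi (p k))) n - - Jint psi s)%C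
                  = (E n + (RInt (V:=CV) (gs psi s) (xi (pred n)) 1 - psi (p n) * (cis (s * 1) - cis (s * xi (pred n)))))%C).
  { unfold E, Jint. rewrite <- (Hs_diff psi Hc). rewrite Hpn, H1. ring. }
  unfold f in Hfin. rewrite Hfin.
  eapply Rle_lt_trans. apply Cmod_triangle.
  destruct n. lia.
  specialize (Hest (S n) ltac:(lia)). simpl pred in *.
  specialize (Htag n ltac:(lia)) as T1. specialize (Pin n ltac:(lia)) as P1.
  specialize (Hmesh n ltac:(lia)) as M1.
  eapply Rle_lt_trans. apply Rplus_le_compat. apply Hest. apply (piece_est psi Hc) with (e := e).
  + lra.
  + lra.
  + intros x Hx. apply Hclose. lia. lra. rewrite Hpn in *. unfold Rabs; destruct Rcase_abs; lra.
  + assert (e * Rabs s < eps).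
    { assert (E2: e * (Rabs s + 1) = eps / 2) by (unfold e; field; pose proof (Rabs_pos s); lra).
      pose proof (Rabs_pos s). nra. }
    match goal with |- ?a + ?b < _ => replace (a + b) with (e * Rabs s) by ring end. lra.
Qed.

End IBP.

Open Scope R_scope.

Definition upart (N : nat) (k : nat) : R := INR k / INR N.

Lemma upart_partition N : (0 < N)%nat -> partition 0 1 (upart N) N.
Proof.
  intros HN. assert (0 < INR N) by (apply lt_0_INR; auto).
  unfold partition, upart. split. simpl. unfold Rdiv; ring. split. field; lra.
  intros k Hk. rewrite S_INR. apply Rmult_le_compat_r. left; apply Rinv_0_lt_compat; auto. lra.
Qed.

Lemma upart_mesh N k : (0 < N)%nat -> upart N (S k) - upart N k = / INR N.
Proof. intros HN. assert (0 < INR N) by (apply lt_0_INR; auto). unfold upart. rewrite S_INR. field. lra. Qed.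

Lemma upart_in N k : (0 < N)%nat -> (k <= N)%nat -> 0 <= upart N k <= 1.
Proof.
  intros HN Hk. assert (0 < INR N) by (apply lt_0_INR; auto). unfold upart. split.
  apply Rdiv_le_0_compat. apply pos_INR. auto.
  apply Rmult_le_reg_r with (INR N); auto. field_simplify; try lra. apply le_INR; auto.
Qed.

Definition RSsum (f g : R -> C) (N : nat) : C :=
  Csum (fun k => f (upart N k) * (g (upart N (S k)) - g (upart N k)))%C N.

Lemma RS_unif f g I : is_RS_integral f g 0 1 I -> forall eps, 0 < eps ->
  exists N0, forall N, (N0 <= N)%nat -> (0 < N)%nat -> Cmod (RSsum f g N - I)%C < eps.
Proof.
  intros H eps He. destruct (H eps He) as [d [Hd Hp]].
  destruct (archimed (/ d)) as [Ha _].
  assert (0 <= IZR (up (/ d))). { left. eapply Rlt_trans; [|exact Ha]. apply Rinv_0_lt_compat; auto. }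
  exists (Z.to_nat (up (/ d))). intros N HN HN0.
  apply Hp; auto. apply upart_partition; auto.
  - intros k Hk. rewrite upart_mesh by auto.
    assert (0 < INR N) by (apply lt_0_INR; auto).
    assert (/ d < INR N).
    { eapply Rlt_le_trans. exact Ha. rewrite <- (Z2Nat.id (up (/ d))). rewrite <- INR_IZR_INZ. apply le_INR; auto.
      apply le_IZR. auto. }
    rewrite <- (Rinv_inv d). apply Rinv_lt_contravar; auto.
    apply Rmult_lt_0_compat; auto. apply Rinv_0_lt_compat; auto.
  - intros k Hk. pose proof (upart_mesh N k HN0). assert (0 < / INR N) by (apply Rinv_0_lt_compat, lt_0_INR; auto). lra.
Qed.

Lemma RS_unique f g I1 I2 : is_RS_integral f g 0 1 I1 -> is_RS_integral f g 0 1 I2 -> I1 = I2.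
Proof.
  intros A B. destruct (Req_dec (Cmod (I1 - I2)%C) 0) as [E|E].
  - apply Cmod_eq_0 in E. replace I1 with (I1 - I2 + I2)%C by ring. rewrite E. ring.
  - exfalso. pose proof (Cmod_ge_0 (I1 - I2)%C).
    set (e := Cmod (I1 - I2)%C / 2).
    destruct (RS_unif _ _ _ A e) as [N1 HN1]. unfold e; lra.
    destruct (RS_unif _ _ _ B e) as [N2 HN2]. unfold e; lra.
    set (N := S (N1 + N2)).
    specialize (HN1 N ltac:(unfold N; lia) ltac:(unfold N; lia)).
    specialize (HN2 N ltac:(unfold N; lia) ltac:(unfold N; lia)).
    assert (Cmod (I1 - I2)%C <= Cmod (RSsum f g N - I1)%C + Cmod (RSsum f g N - I2)%C).
    { replace (I1 - I2)%C with (- (RSsum f g N - I1) + (RSsum f g N - I2))%C by ring.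
      eapply Rle_trans. apply Cmod_triangle. rewrite Cmod_opp. lra. }
    unfold e in *. lra.
Qed.

Section Pos.
Variable psi : R -> C.
Hypothesis Hc : cont_on01 psi.
Hypothesis H0 : psi 0 = 0%C.
Hypothesis H1 : psi 1 = 0%C.

Lemma hat_is s : is_RInt (V:=CV) (fun x => cis (s * x) * psit psi x)%C 0 1 (hatpsi psi s).
Proof.
  assert (Ex: ex_RInt (V:=CV) (fun x => cis (s * x) * psit psi x)%C 0 1).
  { apply ex_RInt_continuous. intros. apply Ccont_continuous. apply Ccont_mult. apply cis_lin_Ccont. apply psit_Ccont; auto. }
  unfold hatpsi. apply is_RInt_C.
  - rewrite (RInt_ext (V:=R_CompleteNormedModule) _ (fun x => fst (cis (s * x) * psit psi x)%C)).
    apply (RInt_correct (V:=R_CompleteNormedModule)). apply (ex_RInt_fct_extend_fst (U:=R_NormedModule) (V:=R_NormedModule)). exact Ex.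
    intros x Hx. rewrite Rmin_left, Rmax_right in Hx by lra. unfold psit. rewrite clamp_id by lra. reflexivity.
  - rewrite (RInt_ext (V:=R_CompleteNormedModule) _ (fun x => snd (cis (s * x) * psit psi x)%C)).
    apply (RInt_correct (V:=R_CompleteNormedModule)). apply (ex_RInt_fct_extend_snd (U:=R_NormedModule) (V:=R_NormedModule)). exact Ex.
    intros x Hx. rewrite Rmin_left, Rmax_right in Hx by lra. unfold psit. rewrite clamp_id by lra. reflexivity.
Qed.

Lemma Jint_hat s : Jint psi s = (Ci * RtoC s * hatpsi psi s)%C.
Proof.
  unfold Jint, Hs. apply (is_RInt_unique (V:=CV)).
  eapply is_RInt_ext; [| apply (is_RInt_Cmult (Ci * RtoC s)%C); apply hat_is].
  intros x _. unfold gs, dfs. simpl. ring.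
Qed.

Lemma Cmod_Jint s : Cmod (Jint psi s) = Cmod (RtoC (s ^ 1) * Cderive_n 0 (hatpsi psi) s)%C.
Proof. rewrite Jint_hat. simpl. rewrite !Cmod_mult, Cmod_Ci, !Cmod_R. rewrite Rmult_1_r. ring. Qed.

Lemma pos_decay :
  is_lim (fun t => Cmod (RtoC (t ^ 1) * Cderive_n 0 (hatpsi psi) t)%C) p_infty 0 ->
  forall eps, 0 < eps -> exists T, forall t, T < t -> Cmod (Jint psi t) < eps.
Proof.
  intros Hl eps He. apply is_lim_spec in Hl. destruct (Hl (mkposreal eps He)) as [T HT].
  exists T. intros t Ht. specialize (HT t Ht). simpl in HT. rewrite Cmod_Jint.
  rewrite Rminus_0_r in HT. eapply Rle_lt_trans; [apply Rle_abs|exact HT].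
Qed.

End Pos.

Open Scope R_scope.

Lemma part_mono a b p n : partition a b p n -> forall i j, (i <= j <= n)%nat -> p i <= p j.
Proof.
  intros [_ [_ Hm]] i j Hij. destruct Hij as [Hij Hjn].
  induction j. replace i with 0%nat by lia. lra.
  destruct (Nat.eq_dec i (S j)). subst; lra.
  specialize (IHj ltac:(lia) ltac:(lia)). specialize (Hm j ltac:(lia)). lra.
Qed.

Lemma part_in p n : partition 0 1 p n -> forall i, (i <= n)%nat -> 0 <= p i <= 1.
Proof.
  intros H i Hi. pose proof (part_mono _ _ _ _ H 0 i ltac:(lia)). pose proof (part_mono _ _ _ _ H i n ltac:(lia)).
  destruct H as [Ha0 [Ha1 _]]. lra.
Qed.

Lemma part_pos p n : partition 0 1 p n -> (0 < n)%nat.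
Proof. intros [H0 [H1 _]]. destruct n. rewrite H0 in H1. lra. lia. Qed.

Section Var.
Variable psi : R -> C.

Definition varsum (p : nat -> R) (n : nat) : R :=
  rsum (fun k => Cmod (psi (p (S k)) - psi (p k))%C) n.

Lemma varsum_nonneg p n : 0 <= varsum p n.
Proof. apply rsum_nonneg. intros; apply Cmod_ge_0. Qed.

Hypothesis Hbv : bounded_variation01 psi.

Lemma var_sup : exists V, 0 <= V /\ (forall p n, partition 0 1 p n -> varsum p n <= V) /\
  (forall eps, 0 < eps -> exists p n, partition 0 1 p n /\ V - eps < varsum p n).
Proof.
  destruct Hbv as [M HM].
  set (E := fun r => exists p n, partition 0 1 p n /\ r = varsum p n).
  assert (Eb: bound E).
  { exists M. intros r [p [n [Hp Hr]]]. subst r. unfold varsum. rewrite <- rsum_sum_f_R0.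
    apply HM; auto. eapply part_pos; eauto. }
  assert (Ene: exists r, E r).
  { exists (varsum INR 1). exists INR, 1%nat. split; auto. split. reflexivity. split. simpl; lra.
    intros k Hk. rewrite S_INR. lra. }
  destruct (completeness E Eb Ene) as [V [HV1 HV2]].
  exists V. split; [|split].
  - destruct Ene as [r [p [n [Hp Hr]]]]. eapply Rle_trans. 2: apply HV1; exists p, n; split; eauto.
    subst r; apply varsum_nonneg.
  - intros p n Hp. apply HV1. exists p, n. auto.
  - intros eps He. apply NNPP. intros Hn.
    assert (is_upper_bound E (V - eps)).
    { intros r [p [n [Hp Hr]]]. subst r. apply Rnot_lt_le. intros Hl. apply Hn. exists p, n. auto. }
    specialize (HV2 _ H). lra.
Qed.

Variable q : nat -> R.
Definition clip (b : nat) (x : R) : R := Rmax (q b) (Rmin (q (S b)) x).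

Lemma clip_in b x : q b <= q (S b) -> q b <= x <= q (S b) -> clip b x = x.
Proof. unfold clip, Rmax, Rmin. intros. repeat destruct Rle_dec; lra. Qed.
Lemma clip_lo b x : q b <= q (S b) -> x <= q b -> clip b x = q b.
Proof. unfold clip, Rmax, Rmin. intros. repeat destruct Rle_dec; lra. Qed.
Lemma clip_hi b x : q b <= q (S b) -> q (S b) <= x -> clip b x = q (S b).
Proof. unfold clip, Rmax, Rmin. intros. repeat destruct Rle_dec; lra. Qed.
Lemma clip_mono b x y : x <= y -> clip b x <= clip b y.
Proof. unfold clip, Rmax, Rmin. intros. repeat destruct Rle_dec; lra. Qed.
Lemma clip_le b x : q b <= q (S b) -> clip b x <= q (S b).
Proof. unfold clip, Rmax, Rmin. intros. repeat destruct Rle_dec; lra. Qed.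
Lemma clip_ge b x : q b <= clip b x.
Proof. unfold clip, Rmax, Rmin. intros. repeat destruct Rle_dec; lra. Qed.

Variable B : nat.
Hypothesis HQ : partition 0 1 q B.

Lemma clip_sum z : 0 <= z <= 1 -> (0 < B)%nat ->
  Csum (fun b => psi (clip b z)) B = (psi z + Csum (fun i => psi (q (S i))) (pred B))%C.
Proof.
  intros Hz HB. pose proof (part_mono _ _ _ _ HQ) as Hm. destruct HQ as [Hq0 [HqB _]].
  assert (G: forall m, (1 <= m <= B)%nat -> q 0%nat <= z <= q m ->
     Csum (fun b => psi (clip b z)) m = (psi z + Csum (fun i => psi (q (S i))) (pred m))%C).
  { induction m; intros Hm1 Hzm. lia. destruct m.
    - simpl. rewrite clip_in. ring. apply Hm; lia. lra.
    - assert (Sp: Csum (fun b => psi (clip b z)) (S (S m)) = (Csum (fun b => psi (clip b z)) (S m) + psi (clip (S m) z))%C) by reflexivity.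
      assert (Sq: Csum (fun i => psi (q (S i))) (pred (S (S m))) = (Csum (fun i => psi (q (S i))) (pred (S m)) + psi (q (S m)))%C).
      { simpl pred. destruct m. simpl. ring. reflexivity. }
      rewrite Sp, Sq. destruct (Rle_dec z (q (S m))).
      + rewrite IHm by (lia || lra). rewrite clip_lo by (first [apply Hm; lia | lra]). ring.
      + assert (Hall: Csum (fun b => psi (clip b z)) (S m) = Csum (fun i => psi (q (S i))) (S m)).
        { apply Csum_ext. intros k Hk. rewrite clip_hi. auto. apply Hm; lia.
          pose proof (Hm (S k) (S m) ltac:(lia)). lra. }
        rewrite Hall. rewrite (clip_in (S m) z); [ | apply Hm; lia | lra].
        replace (Csum (fun i => psi (q (S i))) (S m)) with (Csum (fun i => psi (q (S i))) (pred (S m)) + psi (q (S m)))%C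
          by (simpl pred; reflexivity).
        ring. }
  apply G. lia. rewrite Hq0, HqB. auto.
Qed.

Definition Dq (p : nat -> R) (j b : nat) : C := (psi (clip b (p (S j))) - psi (clip b (p j)))%C.

Lemma D_decomp p n j : partition 0 1 p n -> (j < n)%nat ->
  Csum (fun b => Dq p j b) B = (psi (p (S j)) - psi (p j))%C.
Proof.
  intros Hp Hj. pose proof (part_pos _ _ HQ) as HB. unfold Dq. rewrite Csum_minus.
  rewrite !clip_sum; auto; try (apply (part_in _ _ Hp); lia). ring.
Qed.

Lemma D_tele p n b : partition 0 1 p n -> (b < B)%nat ->
  Csum (fun j => Dq p j b) n = (psi (q (S b)) - psi (q b))%C.
Proof.
  intros Hp Hb. unfold Dq. rewrite (Csum_tele (fun j => psi (clip b (p j)))).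
  destruct Hp as [Hp0 [Hpn _]]. rewrite Hp0, Hpn.
  pose proof (part_in _ _ HQ b ltac:(lia)). pose proof (part_in _ _ HQ (S b) ltac:(lia)).
  pose proof (part_mono _ _ _ _ HQ b (S b) ltac:(lia)).
  rewrite (clip_lo b 0), (clip_hi b 1); auto; lra.
Qed.

Lemma D_var p n : partition 0 1 p n ->
  rsum (fun b => rsum (fun j => Cmod (Dq p j b)) n) B = varsum (fun m => clip (m / n)%nat (p (m mod n)%nat)) (B * n).
Proof.
  intros Hp. pose proof (part_pos _ _ Hp) as Hn.
  unfold varsum. rewrite <- (rsum_double (fun b j => Cmod (Dq p j b)) B n Hn).
  apply rsum_ext. intros m Hm. unfold Dq. f_equal.
  pose proof (Nat.div_mod m n ltac:(lia)) as Edm. pose proof (Nat.mod_upper_bound m n ltac:(lia)) as Em.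
  set (b := (m / n)%nat) in *. set (j := (m mod n)%nat) in *.
  assert (b < B)%nat. { destruct (Nat.lt_ge_cases b B); auto. assert (B * n <= n * b)%nat by nia. lia. }
  destruct (Nat.eq_dec (S j) n) as [Ej|Ej].
  - assert (E1: (S m / n = S b)%nat). { replace (S m) with ((S b) * n)%nat by lia. apply Nat.div_mul; lia. }
    assert (E2: (S m mod n = 0)%nat). { replace (S m) with ((S b) * n)%nat by lia. apply Nat.Div0.mod_mul. }
    rewrite E1, E2. destruct Hp as [Hp0 [Hpn _]]. rewrite Hp0, Ej, Hpn.
    pose proof (part_in _ _ HQ (S b) ltac:(lia)).
    assert (clip (S b) 0 = q (S b)). { unfold clip, Rmax, Rmin. repeat destruct Rle_dec; lra. }
    pose proof (part_mono _ _ _ _ HQ b (S b) ltac:(lia)).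
    rewrite H1, clip_hi; auto. lra.
  - assert (E1: (S m / n = b)%nat). { replace (S m) with (S j + b * n)%nat by lia. rewrite Nat.div_add by lia. rewrite Nat.div_small; lia. }
    assert (E2: (S m mod n = S j)%nat). { replace (S m) with (S j + b * n)%nat by lia. rewrite Nat.Div0.mod_add. apply Nat.mod_small; lia. }
    rewrite E1, E2. reflexivity.
Qed.

Lemma combined_part p n : partition 0 1 p n ->
  partition 0 1 (fun m => clip (m / n)%nat (p (m mod n)%nat)) (B * n).
Proof.
  intros Hp. pose proof (part_pos _ _ Hp) as Hn. pose proof Hp as [Hp0 [Hpn Hpm]].
  pose proof HQ as [Hq0 [HqB _]].
  split; [|split].
  - rewrite Nat.div_0_l, Nat.Div0.mod_0_l by lia. rewrite Hp0. unfold clip. rewrite Hq0.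
    pose proof (part_in _ _ HQ 1%nat ltac:(pose proof (part_pos _ _ HQ); lia)).
    unfold Rmax, Rmin. repeat destruct Rle_dec; lra.
  - rewrite Nat.div_mul, Nat.Div0.mod_mul by lia. rewrite Hp0. unfold clip. rewrite HqB.
    unfold Rmax, Rmin. repeat destruct Rle_dec; lra.
  - intros m Hm.
    pose proof (Nat.div_mod m n ltac:(lia)) as Edm. pose proof (Nat.mod_upper_bound m n ltac:(lia)) as Em.
    set (b := (m / n)%nat) in *. set (j := (m mod n)%nat) in *.
    assert (b < B)%nat. { destruct (Nat.lt_ge_cases b B); auto. assert (B * n <= n * b)%nat by nia. lia. }
    pose proof (part_mono _ _ _ _ HQ b (S b) ltac:(lia)).
    destruct (Nat.eq_dec (S j) n) as [Ej|Ej].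
    + assert (E1: (S m / n = S b)%nat). { replace (S m) with ((S b) * n)%nat by lia. apply Nat.div_mul; lia. }
      assert (E2: (S m mod n = 0)%nat). { replace (S m) with ((S b) * n)%nat by lia. apply Nat.Div0.mod_mul. }
      rewrite E1, E2. eapply Rle_trans. apply clip_le; auto. apply clip_ge.
    + assert (E1: (S m / n = b)%nat). { replace (S m) with (S j + b * n)%nat by lia. rewrite Nat.div_add by lia. rewrite Nat.div_small; lia. }
      assert (E2: (S m mod n = S j)%nat). { replace (S m) with (S j + b * n)%nat by lia. rewrite Nat.Div0.mod_add. apply Nat.mod_small; lia. }
      rewrite E1, E2. apply clip_mono. apply Hpm. lia.
Qed.

End Var.

Open Scope R_scope.

Definition kap : R := cos 1.
Lemma kap_pos : 0 < kap.
Proof. unfold kap. apply cos_gt_0. pose proof PI2_1. lra. pose proof PI2_1. lra. Qed.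

Lemma sin_lip_low x y : 0 <= y <= x -> x <= 1 -> kap * (x - y) <= sin x - sin y.
Proof.
  intros Hy Hx. destruct (Req_dec x y). subst. lra.
  destruct (MVT_cor2 sin cos y x ltac:(lra) (fun c _ => derivable_pt_lim_sin c)) as [c [Hc Hc2]].
  rewrite Hc. apply Rmult_le_compat_r. lra. unfold kap. apply cos_decr_1; pose proof PI2_1; lra.
Qed.

Lemma sin_mono x y : 0 <= y <= x -> x <= 1 -> sin y <= sin x.
Proof. intros. pose proof (sin_lip_low x y H H0). pose proof kap_pos. nra. Qed.

Definition unitc (z : C) : C := if Req_EM_T (Cmod z) 0 then 1%C else (Cconj z / RtoC (Cmod z))%C.

Lemma unitc_mul z : (unitc z * z)%C = RtoC (Cmod z).
Proof.
  unfold unitc. destruct Req_EM_T as [E|E].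
  - apply Cmod_eq_0 in E. subst. rewrite Cmod_0. ring.
  - assert (RtoC (Cmod z) <> 0%C). { intros H. apply E. apply RtoC_inj in H. auto. }
    replace (Cconj z / RtoC (Cmod z) * z)%C with ((z * Cconj z) / RtoC (Cmod z))%C by (field; auto).
    rewrite <- Cmod2_conj. replace (Cmod z ^ 2)%R with (Cmod z * Cmod z)%R by ring. rewrite RtoC_mult. field. auto.
Qed.

Lemma Cmod_unitc z : Cmod (unitc z) = 1.
Proof.
  unfold unitc. destruct Req_EM_T as [E|E]. apply Cmod_1.
  assert (RtoC (Cmod z) <> 0%C). { intros H. apply E. apply RtoC_inj in H. auto. }
  rewrite Cmod_div; auto. rewrite Cmod_conj, Cmod_R, Rabs_right. field; auto. apply Rle_ge, Cmod_ge_0.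
Qed.

Lemma Csum_indic (f : nat -> C) n k : (k < n)%nat ->
  Csum (fun b => if Nat.eq_dec b k then f b else 0%C) n = f k.
Proof.
  induction n; intros Hk. lia. simpl. destruct (Nat.eq_dec n k).
  subst. rewrite (Csum_ext _ (fun _ => 0%C)). assert (Z: forall m, Csum (fun _ => 0%C) m = 0%C) by (induction m; simpl; [auto| rewrite IHm; ring]).
  rewrite Z. ring.
  intros j Hj; destruct (Nat.eq_dec j k); lia || auto.
  rewrite IHn by lia. ring.
Qed.

Lemma Csum_swap (f : nat -> nat -> C) n m :
  Csum (fun i => Csum (fun j => f i j) m) n = Csum (fun j => Csum (fun i => f i j) n) m.
Proof.
  induction n; simpl. assert (Z: forall m, Csum (fun _ => 0%C) m = 0%C) by (induction m0; simpl; [auto| rewrite IHm0; ring]).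
  rewrite Z; auto. rewrite IHn. rewrite <- Csum_plus. reflexivity.
Qed.

Lemma Csum_mult_l c f n : (c * Csum f n)%C = Csum (fun k => c * f k)%C n.
Proof. rewrite Csum_scal. auto. Qed.

Lemma fin_min (P : nat -> Prop) (f : nat -> R) N : (forall k, (k < N)%nat -> P k -> 0 < f k) ->
  exists m, 0 < m /\ forall k, (k < N)%nat -> P k -> m <= f k.
Proof.
  induction N; intros H. exists 1. split. lra. intros; lia.
  destruct IHN as [m [Hm Hk]]. intros; apply H; auto.
  destruct (classic (P N)) as [PN|PN].
  - exists (Rmin m (f N)). split. apply Rmin_pos; auto. intros k Hk' Pk.
    destruct (Nat.eq_dec k N). subst. apply Rmin_r. eapply Rle_trans. apply Rmin_l. apply Hk; auto. lia.
  - exists m. split; auto. intros k Hk' Pk. destruct (Nat.eq_dec k N). subst; contradiction. apply Hk; auto; lia.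
Qed.

Lemma divmod3 m : ((m mod 3 < 2)%nat -> (S m / 3 = m / 3)%nat /\ (S m mod 3 = S (m mod 3))%nat) /\
                  ((m mod 3 = 2)%nat -> (S m / 3 = S (m / 3))%nat /\ (S m mod 3 = 0)%nat).
Proof.
  pose proof (Nat.div_mod m 3 ltac:(lia)). pose proof (Nat.mod_upper_bound m 3 ltac:(lia)).
  split; intros.
  - replace (S m) with (S (m mod 3) + (m / 3) * 3)%nat by lia. rewrite Nat.div_add, Nat.Div0.mod_add by lia.
    rewrite Nat.div_small, Nat.mod_small by lia. lia.
  - replace (S m) with (0 + (S (m / 3)) * 3)%nat by lia. rewrite Nat.div_add, Nat.Div0.mod_add by lia. simpl. auto.
Qed.

Open Scope R_scope.

Definition ramp (w v : R) : R := Rmax 0 (Rmin 1 (v / w + 1/2)).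

Definition Rr (B : nat) (c : nat -> R) (w : R) (k : nat) (x : R) : R :=
  if Nat.eq_dec k 0 then 1 else if Compare_dec.lt_dec k B then ramp w (sin x - c k) else 0.

Definition Gfun (B : nat) (sg : nat -> C) (c : nat -> R) (w : R) (x : R) : C :=
  Csum (fun k => sg k * RtoC (Rr B c w k x - Rr B c w (S k) x))%C B.

Lemma ramp_in w v : 0 <= ramp w v <= 1.
Proof. unfold ramp, Rmax, Rmin. repeat destruct Rle_dec; lra. Qed.
Lemma ramp_mono w u v : 0 < w -> u <= v -> ramp w u <= ramp w v.
Proof. intros Hw Huv. unfold ramp. assert (u / w <= v / w) by (apply Rmult_le_compat_r; [left; apply Rinv_0_lt_compat|]; lra).
  unfold Rmax, Rmin. repeat destruct Rle_dec; lra. Qed.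
Lemma ramp_one w v : 0 < w -> w / 2 <= v -> ramp w v = 1.
Proof. intros Hw Hv. unfold ramp. assert (1/2 <= v / w) by (apply Rmult_le_reg_r with w; auto; field_simplify; lra).
  unfold Rmax, Rmin. repeat destruct Rle_dec; lra. Qed.
Lemma ramp_zero w v : 0 < w -> v <= - (w / 2) -> ramp w v = 0.
Proof. intros Hw Hv. unfold ramp. assert (v / w <= - (1/2)) by (apply Rmult_le_reg_r with w; auto; field_simplify; lra).
  unfold Rmax, Rmin. repeat destruct Rle_dec; lra. Qed.

Section GB.
Variables (B : nat) (sg : nat -> C) (c : nat -> R) (w : R).
Hypothesis Hw : 0 < w.
Hypothesis Hsg : forall k, Cmod (sg k) <= 1.
Hypothesis Hc : forall k j, (1 <= k <= j)%nat -> (j < B)%nat -> c k <= c j.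

Lemma Rr_in k x : 0 <= Rr B c w k x <= 1.
Proof. unfold Rr. destruct Nat.eq_dec. lra. destruct Compare_dec.lt_dec. apply ramp_in. lra. Qed.

Lemma Rr_mono k x : Rr B c w (S k) x <= Rr B c w k x.
Proof.
  unfold Rr. destruct (Nat.eq_dec (S k) 0). lia. destruct (Nat.eq_dec k 0).
  - destruct Compare_dec.lt_dec. apply ramp_in. lra.
  - destruct (Compare_dec.lt_dec (S k) B); destruct (Compare_dec.lt_dec k B); try lia.
    + apply ramp_mono; auto. pose proof (Hc k (S k) ltac:(lia) l). lra.
    + apply ramp_in.
    + lra.
Qed.

Lemma Gfun_bound x : Cmod (Gfun B sg c w x) <= 1.
Proof.
  unfold Gfun. eapply Rle_trans. apply Cmod_Csum.
  eapply Rle_trans. apply rsum_le with (g := fun k => Rr B c w k x - Rr B c w (S k) x).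
  intros k Hk. rewrite Cmod_mult, Cmod_R. rewrite Rabs_right. 2: pose proof (Rr_mono k x); lra.
  pose proof (Hsg k). pose proof (Rr_mono k x). pose proof (Cmod_ge_0 (sg k)). nra.
  assert (T: forall f n, rsum (fun k => f k - f (S k)) n = f 0%nat - f n) by (induction n; simpl; [lra| rewrite IHn; lra]).
  rewrite (T (fun k => Rr B c w k x)). unfold Rr at 1. destruct Nat.eq_dec; [|lia]. pose proof (Rr_in B x). lra.
Qed.

Lemma Gfun_main k x : (k < B)%nat ->
  (forall i, (1 <= i <= k)%nat -> w / 2 <= sin x - c i) ->
  (forall i, (k < i)%nat -> (i < B)%nat -> sin x - c i <= - (w / 2)) ->
  Gfun B sg c w x = sg k.
Proof.
  intros Hk Hlo Hhi. unfold Gfun.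
  rewrite <- (Csum_indic sg B k Hk). apply Csum_ext. intros i Hi.
  assert (R1: forall j, (j <= k)%nat -> Rr B c w j x = 1).
  { intros j Hj. unfold Rr. destruct Nat.eq_dec. auto. destruct Compare_dec.lt_dec; [|lia]. apply ramp_one; auto. apply Hlo. lia. }
  assert (R0: forall j, (k < j)%nat -> Rr B c w j x = 0).
  { intros j Hj. unfold Rr. destruct Nat.eq_dec. lia. destruct Compare_dec.lt_dec; auto. apply ramp_zero; auto. }
  destruct (Nat.eq_dec i k).
  - subst. rewrite R1, R0 by lia. replace (1 - 0) with 1 by ring. ring.
  - destruct (Nat.lt_ge_cases i k).
    + rewrite !R1 by lia. replace (1 - 1) with 0 by ring. ring.
    + rewrite !R0 by lia. replace (0 - 0) with 0 by ring. ring.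
Qed.

End GB.

Open Scope R_scope.

Lemma rsum_const c n : rsum (fun _ => c) n = INR n * c.
Proof. induction n. simpl. lra. simpl rsum. rewrite IHn, S_INR. lra. Qed.

Section Build.
Variable psi : R -> C.
Variable V : R.
Hypothesis HV : forall p n, partition 0 1 p n -> varsum psi p n <= V.
Variables (a : nat -> R) (B : nat).
Hypothesis Ha : partition 0 1 a B.
Variables (eps1 tau : R).
Hypothesis He1 : 0 < eps1.
Hypothesis Htau : 0 < tau.
Hypothesis Hunif : forall x y, 0 <= x <= 1 -> 0 <= y <= 1 -> Rabs (x - y) <= tau -> Cmod (psi x - psi y)%C <= eps1 / INR B.
Hypothesis Hnear : V - eps1 < varsum psi a B.

Definition dd k := Rmin tau ((a (S k) - a k) / 3).
Definition qq k r := match r with 0%nat => a k | 1%nat => a k + dd k | 2%nat => a (S k) - dd k | _ => a (S k) end.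
Definition qQ m := qq (m / 3) (m mod 3).
Definition sgm k := unitc (psi (qq k 2) - psi (qq k 1))%C.
Definition cc k := sin (a k).

Lemma HB : (0 < B)%nat.
Proof. eapply part_pos; eauto. Qed.

Lemma a_step k : (k < B)%nat -> a k <= a (S k).
Proof. intros. apply (part_mono _ _ _ _ Ha). lia. Qed.
Lemma a_in k : (k <= B)%nat -> 0 <= a k <= 1.
Proof. intros. apply (part_in _ _ Ha). auto. Qed.

Lemma dd_props k : (k < B)%nat -> 0 <= dd k <= tau /\ 3 * dd k <= a (S k) - a k.
Proof.
  intros Hk. pose proof (a_step k Hk). unfold dd. split. split.
  apply Rmin_glb; lra. apply Rmin_l.
  pose proof (Rmin_r tau ((a (S k) - a k) / 3)). lra.
Qed.

Lemma qq_in k r : (k < B)%nat -> (r <= 3)%nat -> 0 <= qq k r <= 1.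
Proof.
  intros Hk Hr. pose proof (dd_props k Hk). pose proof (a_in k ltac:(lia)). pose proof (a_in (S k) ltac:(lia)).
  destruct r as [|[|[|r]]]; simpl; lra.
Qed.

Lemma qq_mono k r : (k < B)%nat -> (r < 3)%nat -> qq k r <= qq k (S r).
Proof.
  intros Hk Hr. pose proof (dd_props k Hk).
  destruct r as [|[|[|r]]]; simpl; try lra; lia.
Qed.

Lemma qQ_S m : qQ (S m) = qq (m / 3) (S (m mod 3)).
Proof.
  unfold qQ. pose proof (divmod3 m) as [D1 D2]. pose proof (Nat.mod_upper_bound m 3 ltac:(lia)).
  destruct (Nat.eq_dec (m mod 3) 2) as [E|E].
  - destruct (D2 E) as [E1 E2]. rewrite E1, E2, E. reflexivity.
  - destruct (D1 ltac:(lia)) as [E1 E2]. rewrite E1, E2. reflexivity.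
Qed.

Lemma m_bound m : (m < B * 3)%nat -> (m / 3 < B)%nat.
Proof. intros. apply Nat.Div0.div_lt_upper_bound. lia. Qed.

Lemma qQ_part : partition 0 1 qQ (B * 3).
Proof.
  split; [|split].
  - unfold qQ. simpl. destruct Ha as [H0 _]. auto.
  - unfold qQ. rewrite Nat.div_mul, Nat.Div0.mod_mul by lia. simpl. destruct Ha as [_ [H1 _]]. auto.
  - intros m Hm. rewrite qQ_S. unfold qQ at 1. apply qq_mono. apply m_bound; auto. apply Nat.mod_upper_bound; lia.
Qed.

Lemma varQ_eq : varsum psi qQ (B * 3) =
  rsum (fun k => rsum (fun r => Cmod (psi (qq k (S r)) - psi (qq k r))%C) 3) B.
Proof.
  unfold varsum. rewrite <- (rsum_double (fun k r => Cmod (psi (qq k (S r)) - psi (qq k r))%C) B 3) by lia.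
  apply rsum_ext. intros m Hm. rewrite qQ_S. reflexivity.
Qed.

Lemma varQ_ge : varsum psi a B <= varsum psi qQ (B * 3).
Proof.
  rewrite varQ_eq. unfold varsum. apply rsum_le. intros k Hk. simpl.
  replace (psi (a (S k)) - psi (a k))%C with ((psi (a k + dd k) - psi (a k)) + (psi (a (S k) - dd k) - psi (a k + dd k))
       + (psi (a (S k)) - psi (a (S k) - dd k)))%C by ring.
  eapply Rle_trans. apply Cmod_triangle. pose proof (Cmod_triangle (psi (a k + dd k) - psi (a k)) (psi (a (S k) - dd k) - psi (a k + dd k))). lra.
Qed.

Definition zf (b : nat) : R := if Nat.eq_dec (b mod 3) 1 then 0 else 1.

Lemma zone_small : rsum (fun b => zf b * Cmod (psi (qQ (S b)) - psi (qQ b))%C) (B * 3) <= 2 * eps1.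
Proof.
  set (f := fun k r => (if Nat.eq_dec r 1 then 0 else 1) * Cmod (psi (qq k (S r)) - psi (qq k r))%C).
  rewrite (rsum_ext _ (fun m => f (m / 3)%nat (m mod 3)%nat)).
  2:{ intros m Hm. unfold f, zf. rewrite qQ_S. reflexivity. }
  rewrite rsum_double by lia.
  assert (HB0: 0 < INR B) by (apply lt_0_INR; apply HB).
  apply Rle_trans with (rsum (fun _ => 2 * (eps1 / INR B)) B).
  - apply rsum_le. intros k Hk. unfold f. simpl.
    pose proof (dd_props k Hk). pose proof (a_in k ltac:(lia)). pose proof (a_in (S k) ltac:(lia)).
    assert (C1: Cmod (psi (a k + dd k) - psi (a k))%C <= eps1 / INR B).
    { apply Hunif; try lra. rewrite Rabs_right; lra. }
    assert (C2: Cmod (psi (a (S k)) - psi (a (S k) - dd k))%C <= eps1 / INR B).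
    { apply Hunif; try lra. rewrite Rabs_right; lra. }
    pose proof (Cmod_ge_0 (psi (a (S k) - dd k) - psi (a k + dd k))%C). lra.
  - rewrite rsum_const. right. field. lra.
Qed.

Variable dm : R.
Hypothesis Hdm : 0 < dm.
Hypothesis Hdmk : forall k, (k < B)%nat -> a k < a (S k) -> dm <= dd k.

Definition ww := kap * dm.
Definition Gm (x : R) : C := Gfun B sgm cc ww x.

Lemma ww_pos : 0 < ww.
Proof. unfold ww. pose proof kap_pos. nra. Qed.

Lemma cc_mono k j : (1 <= k <= j)%nat -> (j < B)%nat -> cc k <= cc j.
Proof.
  intros. unfold cc. apply sin_mono. split. apply a_in; lia. apply (part_mono _ _ _ _ Ha); lia. apply a_in; lia.
Qed.

Lemma Gm_bound x : Cmod (Gm x) <= 1.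
Proof. apply Gfun_bound. apply ww_pos. intros; unfold sgm; rewrite Cmod_unitc; lra. apply cc_mono. Qed.

Lemma Gm_main k x : (k < B)%nat -> a k < a (S k) -> a k + dd k / 2 <= x <= a (S k) - dd k / 2 -> Gm x = sgm k.
Proof.
  intros Hk Hlt Hx. pose proof (Hdmk k Hk Hlt). pose proof (dd_props k Hk). pose proof kap_pos.
  pose proof (a_in k ltac:(lia)). pose proof (a_in (S k) ltac:(lia)).
  unfold Gm. apply Gfun_main; auto. apply ww_pos.
  - intros i Hi. unfold cc. assert (a i <= a k) by (apply (part_mono _ _ _ _ Ha); lia).
    pose proof (a_in i ltac:(lia)).
    pose proof (sin_lip_low x (a k) ltac:(lra) ltac:(lra)). pose proof (sin_mono (a k) (a i) ltac:(lra) ltac:(lra)).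
    unfold ww. assert (kap * dm <= kap * dd k) by (apply Rmult_le_compat_l; lra). nra.
  - intros i Hi HiB. unfold cc. assert (a (S k) <= a i) by (apply (part_mono _ _ _ _ Ha); lia).
    pose proof (a_in i ltac:(lia)).
    pose proof (sin_lip_low (a (S k)) x ltac:(lra) ltac:(lra)). pose proof (sin_mono (a i) (a (S k)) ltac:(lra) ltac:(lra)).
    unfold ww. assert (kap * dm <= kap * dd k) by (apply Rmult_le_compat_l; lra). nra.
Qed.

Lemma pt_ineq p xi n j b : partition 0 1 p n -> (j < n)%nat -> (b < B * 3)%nat ->
  (forall j, (j < n)%nat -> p (S j) - p j < dm / 2) -> (forall j, (j < n)%nat -> p j <= xi j <= p (S j)) ->
  Re (unitc (psi (qQ (S b)) - psi (qQ b)) * Dq psi qQ p j b)%C - 2 * zf b * Cmod (Dq psi qQ p j b)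
    <= Re (Gm (xi j) * Dq psi qQ p j b)%C.
Proof.
  intros Hp Hj Hb Hmesh Htag.
  set (D := Dq psi qQ p j b).
  unfold zf. destruct (Nat.eq_dec (b mod 3) 1) as [E|E].
  - destruct (classic (D = 0%C)) as [D0|D0].
    + rewrite D0. rewrite !Cmult_0_r. simpl. lra.
    + set (k := (b / 3)%nat).
      assert (Hk: (k < B)%nat) by (apply m_bound; auto).
      assert (Eq1: qQ b = a k + dd k) by (unfold qQ; fold k; rewrite E; reflexivity).
      assert (Eq2: qQ (S b) = a (S k) - dd k) by (rewrite qQ_S; fold k; rewrite E; reflexivity).
      assert (Eu: unitc (psi (qQ (S b)) - psi (qQ b))%C = sgm k) by (rewrite Eq1, Eq2; reflexivity).
      pose proof (dd_props k Hk) as Hd. pose proof (a_step k Hk) as Hak.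
      pose proof (part_mono _ _ _ _ Hp j (S j) ltac:(lia)) as Hpj.
      assert (Hlt: a k < a (S k)).
      { destruct Hak as [Hak|Hak]; auto. exfalso. apply D0. unfold D, Dq, clip.
        assert (dd k = 0) by (unfold dd; rewrite Hak; replace ((a (S k) - a (S k)) / 3) with 0 by field; unfold Rmin; destruct Rle_dec; lra).
        rewrite Eq1, Eq2. rewrite H, Hak. rewrite Rplus_0_r, Rminus_0_r.
        replace (Rmax (a (S k)) (Rmin (a (S k)) (p (S j)))) with (a (S k)) by (unfold Rmax, Rmin; repeat destruct Rle_dec; lra).
        replace (Rmax (a (S k)) (Rmin (a (S k)) (p j))) with (a (S k)) by (unfold Rmax, Rmin; repeat destruct Rle_dec; lra).
        ring. }
      assert (P1: qQ b < p (S j)).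
      { apply Rnot_le_lt. intros Hle. apply D0. unfold D, Dq. rewrite !(clip_lo qQ b); try lra; try (rewrite Eq1, Eq2; lra). ring. }
      assert (P2: p j < qQ (S b)).
      { apply Rnot_le_lt. intros Hle. apply D0. unfold D, Dq. rewrite !(clip_hi qQ b); try lra; try (rewrite Eq1, Eq2; lra). ring. }
      pose proof (Hdmk k Hk Hlt). specialize (Hmesh j Hj). specialize (Htag j Hj).
      rewrite Gm_main with (k := k); auto. rewrite <- Eu. lra.
      rewrite Eq1 in P1. rewrite Eq2 in P2. lra.
  - pose proof (Gm_bound (xi j)).
    pose proof (Re_le_Cmod (unitc (psi (qQ (S b)) - psi (qQ b)) * D)%C).
    rewrite Cmod_mult, Cmod_unitc in H0.
    pose proof (re_le_Cmod (Gm (xi j) * D)%C). rewrite Cmod_mult in H1.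
    pose proof (Rle_abs (- Re (Gm (xi j) * D)%C)). rewrite Rabs_Ropp in H2.
    pose proof (Cmod_ge_0 D). pose proof (Cmod_ge_0 (Gm (xi j))). nra.
Qed.

Lemma star p xi n : partition 0 1 p n ->
  (forall j, (j < n)%nat -> p (S j) - p j < dm / 2) -> (forall j, (j < n)%nat -> p j <= xi j <= p (S j)) ->
  V - 7 * eps1 <= Re (Csum (fun j => Gm (xi j) * (psi (p (S j)) - psi (p j)))%C n).
Proof.
  intros Hp Hmesh Htag.
  set (D := Dq psi qQ p).
  set (u := fun b => unitc (psi (qQ (S b)) - psi (qQ b))%C).
  set (NB := (B * 3)%nat).
  assert (S1: Csum (fun j => Gm (xi j) * (psi (p (S j)) - psi (p j)))%C n
            = Csum (fun b => Csum (fun j => Gm (xi j) * D j b)%C n) NB).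
  { rewrite <- Csum_swap. apply Csum_ext. intros j Hj.
    rewrite <- (D_decomp psi qQ NB qQ_part p n j Hp Hj). rewrite Csum_mult_l. reflexivity. }
  rewrite S1, Re_Csum.
  set (A := fun b => rsum (fun j => Cmod (D j b)) n).
  set (dQ := fun b => Cmod (psi (qQ (S b)) - psi (qQ b))%C).
  assert (S2: forall b, (b < NB)%nat -> dQ b - 2 * zf b * A b <= Re (Csum (fun j => Gm (xi j) * D j b)%C n)).
  { intros b Hb. rewrite Re_Csum.
    apply Rle_trans with (rsum (fun j => Re (u b * D j b)%C - 2 * zf b * Cmod (D j b)) n).
    - rewrite rsum_minus. rewrite <- (Re_Csum (fun j => (u b * D j b)%C) n). rewrite <- (Csum_mult_l (u b) (fun j => D j b) n). unfold D. rewrite (D_tele psi qQ NB qQ_part p n b Hp Hb).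
      unfold u. rewrite unitc_mul. simpl. unfold A, D. rewrite rsum_scal. fold (dQ b). lra.
    - apply rsum_le. intros j Hj. unfold u, D. apply (pt_ineq p xi n); auto. }
  assert (S3: forall b, (b < NB)%nat -> dQ b <= A b).
  { intros b Hb. unfold dQ, A. rewrite <- (D_tele psi qQ NB qQ_part p n b Hp Hb). apply Cmod_Csum. }
  assert (Z01: forall b, 0 <= zf b <= 1) by (intros; unfold zf; destruct Nat.eq_dec; lra).
  assert (S4: rsum A NB <= V).
  { unfold A, D, NB. rewrite (D_var psi qQ (B * 3) qQ_part p n Hp). apply HV. apply combined_part; auto. apply qQ_part. }
  assert (S5: rsum dQ NB = varsum psi qQ (B * 3)) by reflexivity.
  pose proof zone_small as S6. pose proof varQ_ge as S7.
  assert (S8: rsum (fun b => zf b * A b) NB <= rsum (fun b => zf b * dQ b) NB + (rsum A NB - rsum dQ NB)).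
  { rewrite <- rsum_minus, <- rsum_plus. apply rsum_le. intros b Hb. pose proof (Z01 b). pose proof (S3 b Hb).
    assert (zf b * (A b - dQ b) <= A b - dQ b) by nra. nra. }
  apply Rle_trans with (rsum (fun b => dQ b - 2 * zf b * A b) NB).
  2:{ apply rsum_le. auto. }
  rewrite rsum_minus. rewrite (rsum_ext (fun b => 2 * zf b * A b) (fun b => 2 * (zf b * A b))) by (intros; ring).
  rewrite rsum_scal. fold NB in S6. unfold dQ in S8. fold dQ in S8.
  change (rsum (fun b => zf b * Cmod (psi (qQ (S b)) - psi (qQ b))%C) NB) with (rsum (fun b => zf b * dQ b) NB) in S6.
  change (rsum (fun b => zf b * Cmod (psi (qQ (S b)) - psi (qQ b))%C) NB) with (rsum (fun b => zf b * dQ b) NB) in S8. lra.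
Qed.

End Build.

Open Scope R_scope.

Definition TP := list (C * R).

Fixpoint tpe (l : TP) (x : R) : C :=
  match l with nil => 0%C | cons (c, s) l' => (c * cis (s * x) + tpe l' x)%C end.

Definition tp_scal (a : C) (l : TP) : TP := List.map (fun cs => ((a * fst cs)%C, snd cs)) l.
Definition tp_add (l1 l2 : TP) : TP := List.app l1 l2.
Definition tp_sub (l1 l2 : TP) : TP := List.app l1 (tp_scal (-1)%C l2).
Definition tp_mul (l1 l2 : TP) : TP :=
  List.flat_map (fun cs1 => List.map (fun cs2 => ((fst cs1 * fst cs2)%C, snd cs1 + snd cs2)) l2) l1.
Definition tp_const (a : C) : TP := cons (a, 0) nil.
Definition tp_sin : TP := cons ((- Ci / 2)%C, 1) (cons ((Ci / 2)%C, -1) nil).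

Lemma tpe_app l1 l2 x : tpe (List.app l1 l2) x = (tpe l1 x + tpe l2 x)%C.
Proof. induction l1 as [|[c s] l IH]; simpl. ring. rewrite IH. ring. Qed.

Lemma tpe_scal a l x : tpe (tp_scal a l) x = (a * tpe l x)%C.
Proof. induction l as [|[c s] l IH]; simpl. ring. rewrite IH. ring. Qed.

Lemma tpe_add l1 l2 x : tpe (tp_add l1 l2) x = (tpe l1 x + tpe l2 x)%C.
Proof. apply tpe_app. Qed.

Lemma tpe_sub l1 l2 x : tpe (tp_sub l1 l2) x = (tpe l1 x - tpe l2 x)%C.
Proof. unfold tp_sub. rewrite tpe_app, tpe_scal. ring. Qed.

Lemma tpe_map c1 s1 l2 x : tpe (List.map (fun cs2 => ((c1 * fst cs2)%C, s1 + snd cs2)) l2) x = (c1 * cis (s1 * x) * tpe l2 x)%C.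
Proof.
  induction l2 as [|[c2 s2] l2 IH2]; simpl. ring. rewrite IH2.
  replace ((s1 + s2) * x) with (s1 * x + s2 * x) by ring. rewrite <- cis_mult. ring.
Qed.

Lemma tpe_mul l1 l2 x : tpe (tp_mul l1 l2) x = (tpe l1 x * tpe l2 x)%C.
Proof.
  induction l1 as [|[c1 s1] l IH]; simpl. ring.
  rewrite tpe_app, IH. unfold tp_mul in IH. rewrite tpe_map. ring.
Qed.

Lemma tpe_const a x : tpe (tp_const a) x = a.
Proof. simpl. rewrite Rmult_0_l, cis_0. ring. Qed.

Lemma tpe_sin x : tpe tp_sin x = RtoC (sin x).
Proof.
  simpl. unfold cis. rewrite Rmult_1_l. replace (-1 * x) with (- x) by ring. rewrite cos_neg, sin_neg.
  unfold Ci, Cdiv, Cmult, Cplus, Copp, Cinv, RtoC; simpl. f_equal; field.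
Qed.

Fixpoint pn (n : nat) (u : R) : R := match n with O => 0 | S n' => pn n' u + (u - pn n' u ^ 2) / 2 end.

Lemma bern b n : 0 <= b <= 1 -> (1 - b) ^ n * (1 + INR n * b) <= 1.
Proof.
  intros Hb. induction n. simpl. lra.
  rewrite S_INR. simpl. pose proof (pow_le (1 - b) n ltac:(lra)).
  assert ((1 - b) ^ n * (1 - b) * (1 + (INR n + 1) * b) <= (1 - b) ^ n * (1 + INR n * b)).
  { rewrite Rmult_assoc. apply Rmult_le_compat_l; auto. pose proof (pos_INR n). nra. }
  lra.
Qed.

Lemma pn_err u n : 0 <= u <= 1 -> 0 <= pn n u <= sqrt u /\ sqrt u - pn n u <= sqrt u * (1 - sqrt u / 2) ^ n.
Proof.
  intros Hu. set (r := sqrt u). assert (Hr: 0 <= r <= 1).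
  { split. apply sqrt_pos. unfold r. rewrite <- sqrt_1. apply sqrt_le_1_alt. lra. }
  assert (Hu2: u = r * r) by (unfold r; rewrite sqrt_sqrt; lra).
  induction n.
  - simpl. lra.
  - destruct IHn as [[A1 A2] A3]. change (pn (S n) u) with (pn n u + (u - pn n u ^ 2) / 2). change ((1 - sqrt u / 2) ^ S n) with ((1 - sqrt u / 2) * (1 - sqrt u / 2) ^ n). fold r. set (y := pn n u) in *. rewrite Hu2.
    assert (0 <= (1 - r / 2) ^ n) by (apply pow_le; lra).
    split. split. nra. nra.
    assert (E: r - (y + (r * r - y ^ 2) / 2) = (r - y) * (1 - (r + y) / 2)) by field.
    rewrite E. assert (E2: (r - y) * (1 - (r + y) / 2) <= (r - y) * (1 - r / 2)) by nra.
    eapply Rle_trans. apply E2. replace (r * (1 - r / 2) ^ S n) with (r * (1 - r / 2) ^ n * (1 - r / 2)) by (simpl; ring).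
    apply Rmult_le_compat_r. lra. auto.
Qed.

Lemma pn_bound u n : 0 <= u <= 1 -> Rabs (sqrt u - pn n u) <= 2 / INR (S n).
Proof.
  intros Hu. destruct (pn_err u n Hu) as [[A1 A2] A3]. rewrite Rabs_right by lra.
  eapply Rle_trans. apply A3. set (r := sqrt u). assert (Hr: 0 <= r <= 1).
  { split. apply sqrt_pos. unfold r. rewrite <- sqrt_1. apply sqrt_le_1_alt. lra. }
  pose proof (bern (r / 2) n ltac:(lra)). pose proof (pow_le (1 - r / 2) n ltac:(lra)).
  rewrite S_INR. pose proof (pos_INR n).
  apply Rmult_le_reg_r with (INR n + 1). lra. field_simplify; try lra.
  nra.
Qed.

Fixpoint tpn (n : nat) (v : TP) : TP :=
  match n with O => nil | S n' => tp_add (tpn n' v) (tp_scal (RtoC (1/2)) (tp_sub v (tp_mul (tpn n' v) (tpn n' v)))) end.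

Lemma tpe_tpn n v x u : tpe v x = RtoC u -> tpe (tpn n v) x = RtoC (pn n u).
Proof.
  intros Hv. induction n; simpl. auto.
  rewrite tpe_add, tpe_scal, tpe_sub, tpe_mul, IHn, Hv.
  unfold RtoC, Cplus, Cmult, Cminus, Copp; simpl. f_equal; field.
Qed.

Definition hingeTP (e : R) (N : nat) : TP :=
  let h := tp_scal (RtoC (1/4)) (tp_sub tp_sin (tp_const (RtoC e))) in
  tp_scal (RtoC 4) (tpn N (tp_mul h h)).

Lemma hinge_err e N x : Rabs e <= 3 -> Cmod (tpe (hingeTP e N) x - RtoC (Rabs (sin x - e)))%C <= 8 / INR (S N).
Proof.
  intros He. unfold hingeTP. set (a := (sin x - e) / 4).
  assert (Ha: tpe (tp_mul (tp_scal (RtoC (1/4)) (tp_sub tp_sin (tp_const (RtoC e)))) (tp_scal (RtoC (1/4)) (tp_sub tp_sin (tp_const (RtoC e))))) x = RtoC (a * a)).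
  { rewrite tpe_mul, !tpe_scal, tpe_sub, tpe_sin, tpe_const. unfold a. unfold RtoC, Cmult, Cminus, Cplus, Copp; simpl. f_equal; field. }
  rewrite tpe_scal. rewrite (tpe_tpn N _ x (a * a) Ha).
  assert (Hu: 0 <= a * a <= 1).
  { split. nra. pose proof (SIN_bound x). assert (Rabs a <= 1).
    { unfold a. unfold Rdiv. rewrite Rabs_mult. rewrite (Rabs_right (/4)) by lra.
      pose proof (Rabs_triang (sin x) (- e)). rewrite Rabs_Ropp in H0. 
      assert (Rabs (sin x) <= 1) by (apply Rabs_le; lra). unfold Rminus. nra. }
    assert (a * a = Rabs a * Rabs a) by (rewrite <- Rabs_mult; rewrite Rabs_right; nra).
    pose proof (Rabs_pos a). nra. }
  assert (Hs: Rabs (sin x - e) = 4 * sqrt (a * a)).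
  { change (a * a) with (Rsqr a). rewrite sqrt_Rsqr_abs. unfold a. unfold Rdiv. rewrite Rabs_mult.
    rewrite (Rabs_right (/4)) by lra. field. }
  rewrite Hs. replace (RtoC 4 * RtoC (pn N (a * a)) - RtoC (4 * sqrt (a * a)))%C with (RtoC (4 * (pn N (a * a) - sqrt (a * a))))
    by (unfold RtoC, Cmult, Cminus, Cplus, Copp; simpl; f_equal; ring).
  rewrite Cmod_R, Rabs_mult, Rabs_right by lra. rewrite Rabs_minus_sym.
  pose proof (pn_bound (a * a) N Hu). lra.
Qed.

Lemma ramp_hinge w v : 0 < w -> ramp w v = (Rabs (v + w / 2) - Rabs (v - w / 2)) / (2 * w) + 1 / 2.
Proof.
  intros Hw. unfold ramp. set (t := v / w).
  assert (Ev: v = t * w) by (unfold t; field; lra). rewrite Ev.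
  replace (t * w + w / 2) with ((t + 1/2) * w) by field.
  replace (t * w - w / 2) with ((t - 1/2) * w) by field.
  rewrite !Rabs_mult, (Rabs_right w) by lra.
  replace ((Rabs (t + 1 / 2) * w - Rabs (t - 1 / 2) * w) / (2 * w)) with ((Rabs (t + 1 / 2) - Rabs (t - 1 / 2)) / 2) by (field; lra).
  replace (t * w / w) with t by (field; lra).
  unfold Rabs, Rmax, Rmin. repeat destruct Rcase_abs; repeat destruct Rle_dec; lra.
Qed.

Lemma Rabs_le_inv x y : Rabs x <= y -> - y <= x <= y.
Proof. unfold Rabs; destruct Rcase_abs; lra. Qed.

Definition rampTP (w c : R) (N : nat) : TP :=
  tp_add (tp_scal (RtoC (1 / (2 * w))) (tp_sub (hingeTP (c - w / 2) N) (hingeTP (c + w / 2) N))) (tp_const (RtoC (1/2))).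

Lemma ramp_err w c N x : 0 < w -> w <= 2 -> Rabs c <= 1 ->
  Cmod (tpe (rampTP w c N) x - RtoC (ramp w (sin x - c)))%C <= 8 / (w * INR (S N)).
Proof.
  intros Hw Hw2 Hc. unfold rampTP. rewrite tpe_add, tpe_scal, tpe_sub, tpe_const. rewrite ramp_hinge by auto.
  set (h1 := tpe (hingeTP (c - w / 2) N) x). set (h2 := tpe (hingeTP (c + w / 2) N) x).
  assert (E1: Cmod (h1 - RtoC (Rabs (sin x - (c - w / 2))))%C <= 8 / INR (S N)).
  { apply hinge_err. apply Rabs_le. pose proof (Rabs_le_inv _ _ Hc). lra. }
  assert (E2: Cmod (h2 - RtoC (Rabs (sin x - (c + w / 2))))%C <= 8 / INR (S N)).
  { apply hinge_err. apply Rabs_le. pose proof (Rabs_le_inv _ _ Hc). lra. }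
  replace (sin x - c + w / 2) with (sin x - (c - w / 2)) by ring.
  replace (sin x - c - w / 2) with (sin x - (c + w / 2)) by ring.
  set (A1 := Rabs (sin x - (c - w / 2))) in *. set (A2 := Rabs (sin x - (c + w / 2))) in *.
  replace (RtoC (1 / (2 * w)) * (h1 - h2) + RtoC (1 / 2) - RtoC ((A1 - A2) / (2 * w) + 1 / 2))%C
    with (RtoC (1 / (2 * w)) * ((h1 - RtoC A1) - (h2 - RtoC A2)))%C.
  2:{ unfold RtoC, Cmult, Cminus, Cplus, Copp; simpl. f_equal; field; lra. }
  rewrite Cmod_mult, Cmod_R, Rabs_right.
  2:{ apply Rle_ge. unfold Rdiv. rewrite Rmult_1_l. left. apply Rinv_0_lt_compat. lra. }
  assert (Cmod ((h1 - RtoC A1) - (h2 - RtoC A2))%C <= 16 / INR (S N)).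
  { unfold Cminus at 1. eapply Rle_trans. apply Cmod_triangle. rewrite Cmod_opp. unfold Rdiv in *. lra. }
  assert (0 < INR (S N)) by (apply lt_0_INR; lia).
  apply Rle_trans with (1 / (2 * w) * (16 / INR (S N))).
  apply Rmult_le_compat_l; auto. unfold Rdiv. rewrite Rmult_1_l. left. apply Rinv_0_lt_compat. lra.
  right. field. lra.
Qed.

Definition RrTP (B : nat) (c : nat -> R) (w : R) (N : nat) (k : nat) : TP :=
  if Nat.eq_dec k 0 then tp_const 1%C else if Compare_dec.lt_dec k B then rampTP w (c k) N else nil.

Lemma Rr_err B c w N k x : 0 < w -> w <= 2 -> (forall k, Rabs (c k) <= 1) ->
  Cmod (tpe (RrTP B c w N k) x - RtoC (Rr B c w k x))%C <= 8 / (w * INR (S N)).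
Proof.
  intros Hw Hw2 Hc. assert (0 < INR (S N)) by (apply lt_0_INR; lia).
  assert (0 <= 8 / (w * INR (S N))) by (left; apply Rdiv_lt_0_compat; [lra| apply Rmult_lt_0_compat; lra]).
  unfold RrTP, Rr. destruct Nat.eq_dec.
  - rewrite tpe_const. replace (1 - RtoC 1)%C with (RtoC 0) by (unfold RtoC; apply injective_projections; simpl; ring). rewrite Cmod_0. auto.
  - destruct Compare_dec.lt_dec. apply ramp_err; auto. simpl. replace (0 - RtoC 0)%C with (RtoC 0) by ring. rewrite Cmod_0. auto.
Qed.

Fixpoint GTPaux (B : nat) (sg : nat -> C) (c : nat -> R) (w : R) (N : nat) (m : nat) : TP :=
  match m with
  | O => nil
  | S m' => tp_add (GTPaux B sg c w N m') (tp_scal (sg m') (tp_sub (RrTP B c w N m') (RrTP B c w N (S m'))))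
  end.

Definition GTP B sg c w N := GTPaux B sg c w N B.

Lemma GTP_err B sg c w N x : 0 < w -> w <= 2 -> (forall k, Rabs (c k) <= 1) -> (forall k, Cmod (sg k) <= 1) ->
  Cmod (tpe (GTP B sg c w N) x - Gfun B sg c w x)%C <= INR B * (16 / (w * INR (S N))).
Proof.
  intros Hw Hw2 Hc Hsg. unfold GTP, Gfun.
  assert (forall m, Cmod (tpe (GTPaux B sg c w N m) x - Csum (fun k => sg k * RtoC (Rr B c w k x - Rr B c w (S k) x))%C m)%C
                    <= INR m * (16 / (w * INR (S N)))).
  { induction m.
    - simpl. replace (0 - 0)%C with (RtoC 0) by ring. rewrite Cmod_0. lra.
    - simpl GTPaux. simpl Csum. rewrite tpe_add, tpe_scal, tpe_sub.
      set (e1 := (tpe (RrTP B c w N m) x - RtoC (Rr B c w m x))%C).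
      set (e2 := (tpe (RrTP B c w N (S m)) x - RtoC (Rr B c w (S m) x))%C).
      pose proof (Rr_err B c w N m x Hw Hw2 Hc) as E1. pose proof (Rr_err B c w N (S m) x Hw Hw2 Hc) as E2. fold e1 in E1. fold e2 in E2.
      replace (tpe (GTPaux B sg c w N m) x + sg m * (tpe (RrTP B c w N m) x - tpe (RrTP B c w N (S m)) x) -
               (Csum (fun k => sg k * RtoC (Rr B c w k x - Rr B c w (S k) x))%C m + sg m * RtoC (Rr B c w m x - Rr B c w (S m) x)))%C
        with ((tpe (GTPaux B sg c w N m) x - Csum (fun k => sg k * RtoC (Rr B c w k x - Rr B c w (S k) x))%C m) + sg m * (e1 - e2))%C.
      2:{ unfold e1, e2. rewrite RtoC_minus. ring. }
      eapply Rle_trans. apply Cmod_triangle. rewrite Cmod_mult.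
      assert (Cmod (e1 - e2)%C <= 16 / (w * INR (S N))).
      { unfold Cminus. eapply Rle_trans. apply Cmod_triangle. rewrite Cmod_opp. unfold Rdiv in *. lra. }
      pose proof (Hsg m). pose proof (Cmod_ge_0 (sg m)). pose proof (Cmod_ge_0 (e1 - e2)%C).
      rewrite S_INR. nra. }
  apply H.
Qed.

Open Scope R_scope.

Definition tpsum (L : TP) (F : R -> C) : C := List.fold_right (fun cs acc => (fst cs * F (snd cs) + acc)%C) 0%C L.
Definition Cnorm (L : TP) : R := List.fold_right (fun cs acc => Cmod (fst cs) + acc) 0 L.
Definition smax (L : TP) : R := List.fold_right (fun cs acc => Rabs (snd cs) + acc) 0 L.
Definition tp_shift (t : R) (L : TP) : TP := List.map (fun cs => (fst cs, snd cs + t)) L.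

Lemma tpe_shift t L x : tpe (tp_shift t L) x = (tpe L x * cis (t * x))%C.
Proof.
  induction L as [|[c s] L IH]; simpl. ring. rewrite IH.
  replace ((s + t) * x) with (s * x + t * x) by ring. rewrite <- cis_mult. ring.
Qed.

Lemma Cnorm_shift t L : Cnorm (tp_shift t L) = Cnorm L.
Proof. induction L as [|[c s] L IH]; simpl; auto. rewrite IH. auto. Qed.

Lemma Cnorm_nonneg L : 0 <= Cnorm L.
Proof. induction L as [|[c s] L IH]; simpl. lra. pose proof (Cmod_ge_0 c). lra. Qed.

Lemma smax_in L cs : List.In cs L -> Rabs (snd cs) <= smax L.
Proof.
  induction L as [|[c s] L IH]; simpl. tauto. intros [E|E].
  subst. simpl. pose proof (Rabs_pos s). assert (0 <= smax L).
  { clear. induction L as [|[c s] L IH]; simpl. lra. pose proof (Rabs_pos s). lra. } lra.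
  specialize (IH E). pose proof (Rabs_pos s). lra.
Qed.

Lemma shift_in t L cs : List.In cs (tp_shift t L) -> exists cs0, List.In cs0 L /\ snd cs = snd cs0 + t.
Proof.
  unfold tp_shift. intros H. apply List.in_map_iff in H. destruct H as [cs0 [E H]]. exists cs0. split; auto. subst. reflexivity.
Qed.

Lemma tp_RS L (xi : nat -> R) (Dl : nat -> C) n :
  Csum (fun k => tpe L (xi k) * Dl k)%C n = tpsum L (fun s => Csum (fun k => cis (s * xi k) * Dl k)%C n).
Proof.
  induction L as [|[c s] L IH]; simpl.
  - induction n; simpl. auto. rewrite IHn. ring.
  - rewrite <- IH. rewrite <- Csum_scal. rewrite <- Csum_plus. apply Csum_ext. intros; ring.
Qed.

Lemma tpsum_bound L F M : 0 <= M -> (forall cs, List.In cs L -> Cmod (F (snd cs)) <= M) -> Cmod (tpsum L F) <= Cnorm L * M.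
Proof.
  induction L as [|[c s] L IH]; simpl; intros HM H.
  - rewrite Cmod_0. lra.
  - eapply Rle_trans. apply Cmod_triangle. rewrite Cmod_mult.
    specialize (IH HM (fun cs Hcs => H cs (or_intror Hcs))). specialize (H (c, s) (or_introl eq_refl)). simpl in H.
    pose proof (Cmod_ge_0 c). nra.
Qed.

Lemma Im_bound (z : C) (a k : R) : Cmod z <= a -> 0 < k -> Rabs (Im z) <= k * a + (a - Re z) / k.
Proof.
  intros Ha Hk. pose proof (Re_le_Cmod z). pose proof (Cmod_ge_0 z).
  pose proof (Cmod2_alt z). set (x := Re z) in *. set (y := Im z) in *. set (m := Cmod z) in *.
  assert (Hm: m * m <= a * a) by nra.
  assert (Hxy: y * y = m * m - x * x) by (simpl in H1; lra).
  assert (Hy2: y * y <= 2 * a * (a - x)) by nra.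
  set (b := a - x). assert (0 <= b) by (unfold b; lra).
  assert (2 * a * b <= (k * a + b / k) * (k * a + b / k)).
  { replace ((k * a + b / k) * (k * a + b / k)) with (k * a * (k * a) + 2 * a * b + (b / k) * (b / k)) by (field; lra). nra. }
  assert (0 <= k * a + b / k). { assert (0 <= b / k) by (apply Rdiv_le_0_compat; lra). nra. }
  apply Rle_trans with (Rabs (k * a + b / k)).
  apply Rsqr_le_abs_0. unfold Rsqr. unfold b in *. lra. rewrite Rabs_right; lra.
Qed.

Lemma term_bound (f e D : C) (k : R) : Cmod f <= 1 -> Cmod e = 1 -> 0 < k ->
  Cmod (e * D - Cconj f * e * Cconj (f * D))%C <= 2 * (Cmod D - Re (f * D)%C) * (1 + / k) + 2 * k * Cmod D.
Proof.
  intros Hf He Hk. set (z := (f * D)%C). set (a := Cmod D).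
  assert (Ez: Cmod z = Cmod f * a) by (unfold z, a; apply Cmod_mult).
  replace (e * D - Cconj f * e * Cconj z)%C with ((1 - f * Cconj f) * e * D + Cconj f * e * (z - Cconj z))%C
    by (unfold z; ring).
  eapply Rle_trans. apply Cmod_triangle. rewrite !Cmod_mult, He, Cmod_conj.
  rewrite <- Cmod2_conj. 
  replace (1 - RtoC (Cmod f ^ 2))%C with (RtoC (1 - Cmod f ^ 2)) by (unfold RtoC, Cminus, Cplus, Copp; apply injective_projections; simpl; ring).
  rewrite Cmod_R. pose proof (Cmod_ge_0 f). rewrite Rabs_right by nra.
  assert (Eim: Cmod (z - Cconj z)%C = 2 * Rabs (Im z)).
  { replace (z - Cconj z)%C with (Ci * RtoC (2 * Im z))%C.
    rewrite Cmod_mult, Cmod_Ci, Cmod_R, Rabs_mult, Rabs_right by lra. ring.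
    destruct z as [zx zy]. unfold Ci, RtoC, Cmult, Cconj, Cminus, Cplus, Copp; simpl. apply injective_projections; simpl; ring. }
  rewrite Eim. pose proof (Im_bound z a k ltac:(rewrite Ez; pose proof (Cmod_ge_0 D); unfold a; nra) Hk).
  pose proof (Re_le_Cmod z). rewrite Ez in H1.
  assert (Ha: 0 <= a) by apply Cmod_ge_0.
  assert (T1: (1 - Cmod f ^ 2) * a <= 2 * (a - Re z)).
  { pose proof (Cmod_ge_0 f). assert (0 <= (1 - Cmod f) * (1 - Cmod f) * a) by (apply Rmult_le_pos; [nra|lra]).
    assert ((1 - Cmod f ^ 2) * a = 2 * (a - Cmod f * a) - (1 - Cmod f) * (1 - Cmod f) * a) by ring. lra. }
  assert (T2: Cmod f * (2 * Rabs (Im z)) <= 2 * (k * a + (a - Re z) / k)).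
  { pose proof (Rabs_pos (Im z)). nra. }
  assert (0 <= a - Re z) by nra.
  assert (E3: 2 * (k * a + (a - Re z) / k) = 2 * k * a + 2 * (a - Re z) * / k) by (field; lra).
  assert (0 <= 2 * (a - Re z) * / k). { apply Rmult_le_pos. lra. left; apply Rinv_0_lt_compat; lra. }
  fold a. fold z. nra.
Qed.

Open Scope R_scope.

Lemma big_N (M : R) : exists N : nat, M <= INR N.
Proof.
  destruct (archimed M) as [H _]. destruct (Rle_dec 0 M).
  - exists (Z.to_nat (up M)). rewrite INR_IZR_INZ, Z2Nat.id. lra. apply le_IZR. lra.
  - exists 0%nat. simpl. lra.
Qed.

Lemma phi_exists psi V : cont_on01 psi -> 0 <= V ->
  (forall p n, partition 0 1 p n -> varsum psi p n <= V) ->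
  (forall eps, 0 < eps -> exists p n, partition 0 1 p n /\ V - eps < varsum psi p n) ->
  forall e3, 0 < e3 -> exists (phi : TP) (d0 : R), 0 < d0 /\ (forall x, Cmod (tpe phi x) <= 1) /\
    forall p xi n, partition 0 1 p n -> (forall j, (j < n)%nat -> p (S j) - p j < d0) ->
      (forall j, (j < n)%nat -> p j <= xi j <= p (S j)) ->
      V - e3 <= Re (Csum (fun j => tpe phi (xi j) * (psi (p (S j)) - psi (p j)))%C n).
Proof.
  intros Hc HV0 HV Hopt e3 He3.
  set (eps1 := e3 / 14). assert (He1: 0 < eps1) by (unfold eps1; lra).
  set (eta := e3 / (4 * (V + 1))). assert (Heta: 0 < eta) by (unfold eta; apply Rdiv_lt_0_compat; lra).
  destruct (Hopt eps1 He1) as [a [B [Ha Hnear]]].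
  assert (HB: (0 < B)%nat) by (eapply part_pos; eauto).
  assert (HBr: 0 < INR B) by (apply lt_0_INR; auto).
  destruct (psi_unif psi Hc (eps1 / INR B) ltac:(apply Rdiv_lt_0_compat; lra)) as [du [Hdu Hu]].
  set (tau := du / 2). assert (Htau: 0 < tau) by (unfold tau; lra).
  assert (Hunif: forall x y, 0 <= x <= 1 -> 0 <= y <= 1 -> Rabs (x - y) <= tau -> Cmod (psi x - psi y)%C <= eps1 / INR B).
  { intros x y Hx Hy Hxy. left. apply Hu; auto. unfold tau in Hxy. lra. }
  destruct (fin_min (fun k => a k < a (S k)) (dd a tau) B) as [dm0 [Hdm0 Hdmk0]].
  { intros k Hk Hlt. unfold dd. apply Rmin_pos; lra. }
  set (dm := Rmin dm0 1). assert (Hdm: 0 < dm) by (unfold dm; apply Rmin_pos; lra).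
  assert (Hdmk: forall k, (k < B)%nat -> a k < a (S k) -> dm <= dd a tau k).
  { intros. eapply Rle_trans. apply Rmin_l. apply Hdmk0; auto. }
  assert (Hw: 0 < ww dm) by (apply ww_pos; auto).
  assert (Hw2: ww dm <= 2).
  { unfold ww, kap. pose proof (COS_bound 1). assert (dm <= 1) by apply Rmin_r. pose proof kap_pos. unfold kap in *.
    nra. }
  destruct (big_N (INR B * 16 / (ww dm * eta))) as [N HN].
  set (G := GTP B (sgm psi a tau) (cc a) (ww dm) N).
  assert (HG: forall x, Cmod (tpe G x - Gm psi a B tau dm x)%C <= eta).
  { intros x. unfold G, Gm. eapply Rle_trans. apply GTP_err; auto.
    intros k. unfold cc. apply Rabs_le. apply SIN_bound.
    intros k. unfold sgm. rewrite Cmod_unitc. lra.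
    assert (HS: 0 < INR (S N)) by (apply lt_0_INR; lia).
    assert (He2: 0 <= eta / INR (S N)) by (apply Rdiv_le_0_compat; lra).
    replace (INR B * (16 / (ww dm * INR (S N)))) with ((INR B * 16 / (ww dm * eta)) * (eta / INR (S N))) by (field; lra).
    apply Rle_trans with (INR (S N) * (eta / INR (S N))).
    apply Rmult_le_compat_r; auto. eapply Rle_trans. apply HN. apply le_INR; lia.
    right; field; lra. }
  exists (tp_scal (RtoC (/ (1 + eta))) G), (dm / 2). split. lra.
  assert (Hinv: 0 < / (1 + eta)) by (apply Rinv_0_lt_compat; lra).
  assert (Hphi_close: forall x, Cmod (tpe (tp_scal (RtoC (/ (1 + eta))) G) x - Gm psi a B tau dm x)%C <= 2 * eta).
  { intros x. rewrite tpe_scal. pose proof (Gm_bound psi a B Ha tau dm Hdm x). pose proof (HG x).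
    replace (RtoC (/ (1 + eta)) * tpe G x - Gm psi a B tau dm x)%C
      with (RtoC (/ (1 + eta)) * (tpe G x - Gm psi a B tau dm x) - RtoC (eta / (1 + eta)) * Gm psi a B tau dm x)%C.
    2:{ unfold RtoC, Cmult, Cminus, Cplus, Copp; apply injective_projections; simpl; field; lra. }
    unfold Cminus at 1. eapply Rle_trans. apply Cmod_triangle. rewrite Cmod_opp, !Cmod_mult, !Cmod_R.
    rewrite !Rabs_right. 2: apply Rle_ge, Rdiv_le_0_compat; lra. 2: lra.
    assert (/ (1 + eta) <= 1). { rewrite <- Rinv_1. apply Rinv_le_contravar; lra. }
    assert (eta / (1 + eta) <= eta). { unfold Rdiv. pose proof (Cmod_ge_0 (Gm psi a B tau dm x)). nra. }
    pose proof (Cmod_ge_0 (Gm psi a B tau dm x)). pose proof (Cmod_ge_0 (tpe G x - Gm psi a B tau dm x)%C).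
    assert (0 <= eta / (1 + eta)) by (apply Rdiv_le_0_compat; lra). nra. }
  split.
  - intros x. rewrite tpe_scal, Cmod_mult, Cmod_R, Rabs_right by lra.
    pose proof (Gm_bound psi a B Ha tau dm Hdm x). pose proof (HG x).
    assert (Cmod (tpe G x) <= 1 + eta).
    { replace (tpe G x) with ((tpe G x - Gm psi a B tau dm x) + Gm psi a B tau dm x)%C by ring.
      eapply Rle_trans. apply Cmod_triangle. lra. }
    apply Rmult_le_reg_l with (1 + eta). lra. field_simplify; try lra.
  - intros p xi n Hp Hmesh Htag.
    pose proof (star psi V HV a B Ha eps1 tau Htau Hunif Hnear dm Hdm Hdmk p xi n Hp Hmesh Htag) as Hs.
    set (phi := tp_scal (RtoC (/ (1 + eta))) G) in *.
    assert (Hdiff: Re (Csum (fun j => Gm psi a B tau dm (xi j) * (psi (p (S j)) - psi (p j)))%C n)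
                  - Re (Csum (fun j => tpe phi (xi j) * (psi (p (S j)) - psi (p j)))%C n) <= 2 * eta * V).
    { rewrite <- Rminus_0_r. rewrite !Re_Csum, <- rsum_minus.
      apply Rle_trans with (rsum (fun j => 2 * eta * Cmod (psi (p (S j)) - psi (p j))%C) n).
      - apply rsum_le. intros j Hj.
        replace (Re (Gm psi a B tau dm (xi j) * (psi (p (S j)) - psi (p j)))%C - Re (tpe phi (xi j) * (psi (p (S j)) - psi (p j)))%C)
          with (Re ((Gm psi a B tau dm (xi j) - tpe phi (xi j)) * (psi (p (S j)) - psi (p j)))%C)
          by (unfold Cminus, Cmult, Cplus, Copp; simpl; ring).
        eapply Rle_trans. apply Re_le_Cmod. rewrite Cmod_mult. apply Rmult_le_compat_r. apply Cmod_ge_0.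
        rewrite <- Cmod_opp. replace (- (Gm psi a B tau dm (xi j) - tpe phi (xi j)))%C with (tpe phi (xi j) - Gm psi a B tau dm (xi j))%C by ring.
        apply Hphi_close.
      - rewrite rsum_scal. fold (varsum psi p n). pose proof (HV p n Hp). pose proof (varsum_nonneg psi p n).
        rewrite Rminus_0_r. nra. }
    assert (7 * eps1 + 2 * eta * V <= e3).
    { unfold eps1, eta. assert (2 * (e3 / (4 * (V + 1))) * V <= e3 / 2).
      { apply Rmult_le_reg_r with (4 * (V + 1) / e3). apply Rdiv_lt_0_compat; lra. field_simplify; lra. }
      lra. }
    lra.
Qed.

Open Scope R_scope.

Lemma list_unif psi (Hc : cont_on01 psi) (H0 : psi 0 = 0%C) (H1 : psi 1 = 0%C) (L : TP) e : 0 < e ->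
  exists N0, forall N, (N0 <= N)%nat -> (0 < N)%nat -> forall cs, List.In cs L ->
    Cmod (RSsum (fun x => cis (snd cs * x)) psi N - - Jint psi (snd cs))%C < e.
Proof.
  intros He. induction L as [|cs L IH].
  - exists 0%nat. intros N _ _ cs []. 
  - destruct IH as [N1 HN1].
    destruct (RS_unif _ _ _ (RS_exp psi Hc H0 H1 (snd cs)) e He) as [N2 HN2].
    exists (N1 + N2)%nat. intros N HN HN0 cs' [E|E].
    + subst. apply HN2; auto. lia.
    + apply HN1; auto. lia.
Qed.

Lemma mesh_N d : 0 < d -> exists N0, forall N, (N0 <= N)%nat -> (0 < N)%nat -> / INR N < d.
Proof.
  intros Hd. destruct (big_N (/ d + 1)) as [M HM]. exists M. intros N HN HN0.
  assert (0 < INR N) by (apply lt_0_INR; auto).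
  assert (/ d < INR N). { apply le_INR in HN. lra. }
  rewrite <- (Rinv_inv d). apply Rinv_lt_contravar; auto. apply Rmult_lt_0_compat; auto. apply Rinv_0_lt_compat; auto.
Qed.

Theorem theorem2 (psi : R -> C) :
  cont_on01 psi ->
  bounded_variation01 psi ->
  psi 0 = 0%C -> psi 1 = 0%C ->
  (* psi(x)/x in L_2(0,1) *)
  ex_RInt_gen (fun x => (Cmod (psi x) / x) ^ 2) (at_right 0) (at_point 1) ->
  (* (i) t^m hatpsi^(m)(t) in L_1(1,oo), m = 0,1,2 *)
  (forall m : nat, (m <= 2)%nat ->
     ex_RInt_gen (fun t => Cmod (RtoC (t ^ m) * Cderive_n m (hatpsi psi) t)%C)
       (at_point 1) (Rbar_locally p_infty)) ->
  (* (ii) t^m hatpsi^(m-1)(t) = o(1) as t -> oo, m = 1,2 *)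
  (forall m : nat, (1 <= m <= 2)%nat ->
     is_lim (fun t => Cmod (RtoC (t ^ m) * Cderive_n (pred m) (hatpsi psi) t)%C)
       p_infty 0) ->
  (* conclusion: Psi(t) = int_0^1 e^{itx} dpsi(x) exists and is o(1) as |t| -> oo *)
  (forall t : R, exists I : C, is_RS_integral (fun x => cis (t * x)) psi 0 1 I) /\
  (forall eps, 0 < eps -> exists T : R, forall (t : R) (I : C),
     T < Rabs t -> is_RS_integral (fun x => cis (t * x)) psi 0 1 I -> Cmod I < eps).
Proof.
  intros Hc Hbv H0 H1 _ _ Hii.
  split.
  { intros t. exists (- Jint psi t)%C. apply RS_exp; auto. }
  intros eps He.
  pose proof (pos_decay psi Hc (Hii 1%nat ltac:(lia))) as Hpos.
  destruct (var_sup psi Hbv) as [V [HV0 [HV Hopt]]].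
  set (k := eps / (8 * (V + 1) + 8 * eps)).
  assert (Hk: 0 < k) by (unfold k; apply Rdiv_lt_0_compat; lra).
  assert (HkV: k * V <= eps / 8).
  { unfold k. apply Rmult_le_reg_r with ((8 * (V + 1) + 8 * eps)). lra. field_simplify; nra. }
  assert (Hk1: k <= 1 / 8).
  { unfold k. apply Rmult_le_reg_r with ((8 * (V + 1) + 8 * eps)). lra. field_simplify; nra. }
  set (e3 := k * eps / 16). assert (He3: 0 < e3) by (unfold e3; nra).
  destruct (phi_exists psi V Hc HV0 HV Hopt e3 He3) as [phi [d0 [Hd0 [Hphi1 Hstar]]]].
  set (L := tp_mul phi phi).
  set (C0 := Cnorm L). assert (HC0: 0 <= C0) by apply Cnorm_nonneg.
  set (sm := smax L).
  set (eps2 := eps / (16 * (C0 + 1))). assert (He2: 0 < eps2) by (unfold eps2; apply Rdiv_lt_0_compat; lra).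
  destruct (Hpos eps He) as [T0 HT0].
  destruct (Hpos eps2 He2) as [T1 HT1].
  exists (Rmax T0 (T1 + sm)).
  intros t I Ht HI.
  destruct (Rlt_or_le 0 t) as [tpos | tneg].
  - rewrite Rabs_right in Ht by lra.
    rewrite (RS_unique _ _ _ _ HI (RS_exp psi Hc H0 H1 t)). rewrite Cmod_opp. apply HT0.
    eapply Rle_lt_trans; [apply Rmax_l | exact Ht].
  - rewrite Rabs_left1 in Ht by lra. set (t' := - t).
    assert (Ht': T1 + sm < t') by (eapply Rle_lt_trans; [apply Rmax_r| exact Ht]).
    set (Lt := tp_shift t' L).
    destruct (list_unif psi Hc H0 H1 Lt eps2 He2) as [N1 HN1].
    destruct (RS_unif _ _ _ HI (eps / 8) ltac:(lra)) as [N2 HN2].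
    destruct (mesh_N d0 Hd0) as [N3 HN3].
    set (N := S (N1 + N2 + N3)).
    assert (HN0: (0 < N)%nat) by (unfold N; lia).
    specialize (HN1 N ltac:(unfold N; lia) HN0). specialize (HN2 N ltac:(unfold N; lia) HN0).
    specialize (HN3 N ltac:(unfold N; lia) HN0).
    set (p := upart N).
    assert (Hp: partition 0 1 p N) by (apply upart_partition; auto).
    set (Dl := fun j => (psi (p (S j)) - psi (p j))%C).
    set (S0 := RSsum (fun x => cis (t * x)) psi N).
    set (X := Csum (fun j => tpe Lt (p j) * Dl j)%C N).
    assert (HSX: Cmod (S0 - Cconj X)%C <= 2 * (varsum psi p N - Re (Csum (fun j => tpe phi (p j) * Dl j)%C N)) * (1 + / k) + 2 * k * varsum psi p N).
    { unfold S0, X, RSsum. fold p. rewrite Cconj_Csum, <- Csum_minus.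
      eapply Rle_trans. apply Cmod_Csum.
      apply Rle_trans with (rsum (fun j => 2 * (Cmod (Dl j) - Re (tpe phi (p j) * Dl j)%C) * (1 + / k) + 2 * k * Cmod (Dl j)) N).
      - apply rsum_le. intros j Hj.
        replace (cis (t * p j) * (psi (p (S j)) - psi (p j)) - Cconj (tpe Lt (p j) * Dl j))%C
          with (cis (t * p j) * Dl j - Cconj (tpe phi (p j)) * cis (t * p j) * Cconj (tpe phi (p j) * Dl j))%C.
        apply term_bound; auto. apply Cmod_cis.
        unfold Lt, L. rewrite tpe_shift, tpe_mul. unfold t'.
        rewrite !Cmult_conj. rewrite cis_conj. replace (- (- t * p j)) with (t * p j) by ring. unfold Dl. ring.
      - rewrite rsum_plus. rewrite (rsum_ext _ (fun j => (2 * (1 + / k)) * (Cmod (Dl j) - Re (tpe phi (p j) * Dl j)%C))) by (intros; ring).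
        rewrite !rsum_scal, rsum_minus, <- Re_Csum. unfold varsum. fold Dl. unfold Dl. set (K := 1 + / k). right. ring. }
    assert (Hvar: varsum psi p N <= V) by (apply HV; auto).
    assert (Hre: V - e3 <= Re (Csum (fun j => tpe phi (p j) * Dl j)%C N)).
    { apply Hstar; auto. intros j Hj. unfold p. rewrite upart_mesh; auto. intros j Hj.
      unfold p. pose proof (upart_mesh N j HN0). assert (0 < / INR N) by (apply Rinv_0_lt_compat, lt_0_INR; auto). lra. }
    assert (Hvn: 0 <= varsum psi p N) by apply varsum_nonneg.
    assert (HX: Cmod X <= C0 * (2 * eps2)).
    { unfold X. rewrite tp_RS. unfold C0. rewrite <- (Cnorm_shift t' L). fold Lt.
      apply tpsum_bound. lra. intros cs Hcs.
      destruct (shift_in t' L cs Hcs) as [cs0 [Hin Es]].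
      pose proof (smax_in L cs0 Hin). fold sm in H.
      assert (Hs: T1 < snd cs). { rewrite Es. pose proof (Rle_abs (- snd cs0)). rewrite Rabs_Ropp in H2. lra. }
      specialize (HN1 cs Hcs). specialize (HT1 (snd cs) Hs).
      change (Csum (fun k0 => cis (snd cs * p k0) * Dl k0)%C N) with (RSsum (fun x => cis (snd cs * x)) psi N).
      replace (RSsum (fun x => cis (snd cs * x)) psi N) with ((RSsum (fun x => cis (snd cs * x)) psi N - - Jint psi (snd cs)) + - Jint psi (snd cs))%C by ring.
      eapply Rle_trans. apply Cmod_triangle. rewrite Cmod_opp. lra. }
    replace I with (- (S0 - I) + (S0 - Cconj X) + Cconj X)%C by ring.
    eapply Rle_lt_trans. apply Cmod_triangle. rewrite Cmod_conj.
    eapply Rle_lt_trans. apply Rplus_le_compat_r. apply Cmod_triangle. rewrite Cmod_opp.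
    assert (E1: 2 * (varsum psi p N - Re (Csum (fun j => tpe phi (p j) * Dl j)%C N)) * (1 + / k) + 2 * k * varsum psi p N
                <= 2 * e3 * (1 + / k) + 2 * k * V).
    { assert (0 <= 1 + / k) by (pose proof (Rinv_0_lt_compat k Hk); lra). nra. }
    assert (E2: 2 * e3 * (1 + / k) = k * eps / 8 + eps / 8) by (unfold e3; field; lra).
    assert (E3: C0 * (2 * eps2) <= eps / 8).
    { unfold eps2. apply Rmult_le_reg_r with (8 * (C0 + 1)). lra. field_simplify; nra. }
    assert (k * eps / 8 <= eps / 64) by nra.
    change (RSsum (fun x => cis (t * x)) psi N) with S0 in HN2. lra.
Qed.
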